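(* Let $d\in\{2,3\}$ and let $(W_n)$ be the simple symmetric random walk on $\mathbb{Z}^d$ started at $0$ (each of the $2d$ neighbours chosen with probability $1/(2d)$), and $X_n=n^{-1/4}W_n$. For $t\in\mathbb{R}^d$ set $\psi_n(t)=\mathbb{E}[e^{\langle t,X_n\rangle}]\exp\!\big(-\tfrac{n^{1/2}\|t\|^2}{2d}\big)$. Then $\psi_n\to\psi$ locally uniformly on $\mathbb{R}^d$ and in $L^1(\mathbb{R}^d)$, and $\psi\in L^1(\mathbb{R}^d)$, where $$\psi(t_1,t_2)=\exp\!\Big(-\frac{t_1^4+t_2^4+6t_1^2t_2^2}{96}\Big)\ (d=2),\qquad \psi(t_1,t_2,t_3)=\exp\!\Big(-\frac{t_1^2t_2^2+t_1^2t_3^2+t_2^2t_3^2}{36}\Big)\ (d=3).$$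
   Context: $\langle u,v\rangle=\sum_i u_iv_i$ and $\|\cdot\|$ is the Euclidean norm on $\mathbb{R}^d$. *)

(* Defs.v *)
From Stdlib Require Import Reals List Arith.
Import ListNotations.
Open Scope R_scope.

(* Vectors of R^d are represented as functions nat -> R; only the
   coordinates 0..d-1 are meaningful. *)
Definition rsum (l : list R) : R := fold_right Rplus 0 l.

Definition inner (d : nat) (u v : nat -> R) : R :=
  rsum (map (fun i => u i * v i) (seq 0 d)).

Definition norm2 (d : nat) (u : nat -> R) : R := inner d u u.

(* Steps of the simple random walk on Z^d: step k (k < 2d) moves coordinate
   k/2 by +1 if k is even and by -1 if k is odd. A path of length n is a list
   of n step indices; all (2d)^n paths are equally likely. *)
Fixpoint paths (d n : nat) : list (list nat) :=
  match n with
  | O => [ [] ]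
  | S m => flat_map (fun p => map (fun k => k :: p) (seq 0 (2 * d))) (paths d m)
  end.

Definition step_coord (k i : nat) : R :=
  if Nat.eqb (Nat.div k 2) i then (if Nat.even k then 1 else -1) else 0.

Definition walk_pos (p : list nat) (i : nat) : R :=
  rsum (map (fun k => step_coord k i) p).

Definition Xn (n : nat) (p : list nat) (i : nat) : R :=
  walk_pos p i / Rpower (INR n) (1/4).

(* E[exp <t, X_n>] : uniform average over all (2d)^n paths *)
Definition mgf (d n : nat) (t : nat -> R) : R :=
  / (INR (2 * d)) ^ n * rsum (map (fun p => exp (inner d t (Xn n p))) (paths d n)).

Definition psi_n (d n : nat) (t : nat -> R) : R :=
  mgf d n t * exp (- (sqrt (INR n) * norm2 d t) / (2 * INR d)).

Definition psi (d : nat) (t : nat -> R) : R :=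
  if Nat.eqb d 2 then
    exp (- (t 0%nat ^ 4 + t 1%nat ^ 4 + 6 * t 0%nat ^ 2 * t 1%nat ^ 2) / 96)
  else
    exp (- (t 0%nat ^ 2 * t 1%nat ^ 2 + t 0%nat ^ 2 * t 2%nat ^ 2
            + t 1%nat ^ 2 * t 2%nat ^ 2) / 36).

Definition is_RInt (g : R -> R) (a b l : R) : Prop :=
  exists pr : Riemann_integrable g a b, RiemannInt pr = l.

Definition upd (v : nat -> R) (k : nat) (x : R) : nat -> R :=
  fun i => if Nat.eqb i k then x else v i.

Fixpoint box_int (k : nat) (f : (nat -> R) -> R) (r l : R) : Prop :=
  match k with
  | O => l = f (fun _ => 0)
  | S k' => exists g : R -> R,
      (forall x, box_int k' (fun v => f (upd v k' x)) r (g x)) /\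
      is_RInt g (- r) r l
  end.

(* For continuous g: integral over R^d of |g| exists (is finite) and is <= c,
   i.e. the integrals of |g| over all boxes [-r,r]^d exist and are <= c. *)
Definition L1_le (d : nat) (g : (nat -> R) -> R) (c : R) : Prop :=
  (forall r, 0 <= r -> exists l, box_int d (fun t => Rabs (g t)) r l) /\
  (forall r l, 0 <= r -> box_int d (fun t => Rabs (g t)) r l -> l <= c).

(* Main.v *)
Require Import Defs.
From Stdlib Require Import Reals List Arith Lra Lia FunctionalExtensionality Classical ClassicalEpsilon Factorial ZArith.
Import ListNotations.
Open Scope R_scope.

Lemma rsum_app l1 l2 : rsum (l1 ++ l2) = rsum l1 + rsum l2.
Proof. induction l1; simpl; [ring| rewrite IHl1; ring]. Qed.

Lemma rsum_map_plus {A} (f g : A -> R) l :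
  rsum (map (fun x => f x + g x) l) = rsum (map f l) + rsum (map g l).
Proof. induction l; simpl; [ring| rewrite IHl; ring]. Qed.

Lemma rsum_map_scal {A} (a : R) (f : A -> R) l :
  rsum (map (fun x => a * f x) l) = a * rsum (map f l).
Proof. induction l; simpl; [ring| rewrite IHl; ring]. Qed.

Lemma rsum_map_ext {A} (f g : A -> R) l :
  (forall x, f x = g x) -> rsum (map f l) = rsum (map g l).
Proof. intros H; induction l; simpl; [ring| rewrite IHl, H; ring]. Qed.

Lemma rsum_flat_map {A B} (f : B -> R) (g : A -> list B) l :
  rsum (map f (flat_map g l)) = rsum (map (fun p => rsum (map f (g p))) l).
Proof.
  induction l; simpl; [ring|]. rewrite map_app, rsum_app, IHl; ring.
Qed.

Lemma inner_plus d t u v :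
  inner d t (fun i => u i + v i) = inner d t u + inner d t v.
Proof.
  unfold inner. rewrite <- rsum_map_plus. apply rsum_map_ext. intros; ring.
Qed.

Definition stepsum (d : nat) (c : R) (t : nat -> R) : R :=
  rsum (map (fun k => exp (inner d t (fun i => step_coord k i / c))) (seq 0 (2 * d))).

Lemma paths_sum d c t m :
  rsum (map (fun p => exp (inner d t (fun i => walk_pos p i / c))) (paths d m))
  = stepsum d c t ^ m.
Proof.
  induction m.
  - simpl. unfold inner. replace (rsum (map (fun i => t i * (walk_pos [] i / c)) (seq 0 d))) with 0.
    + rewrite exp_0; ring.
    + unfold walk_pos; simpl. induction (seq 0 d); simpl; [ring|]. rewrite <- IHl. unfold Rdiv; ring.
  - change (paths d (S m)) with (flat_map (fun p => map (fun k => k :: p) (seq 0 (2 * d))) (paths d m)).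
    rewrite rsum_flat_map, <- tech_pow_Rmult, <- IHm.
    rewrite <- (rsum_map_scal (stepsum d c t)). apply rsum_map_ext. intros p.
    rewrite map_map. unfold stepsum.
    rewrite Rmult_comm, <- rsum_map_scal. apply rsum_map_ext. intros k.
    rewrite <- exp_plus. f_equal.
    rewrite <- inner_plus. f_equal. apply functional_extensionality. intros i.
    unfold walk_pos; simpl. unfold Rdiv; ring.
Qed.

Lemma mgf_eq d n t :
  mgf d n t = (/ INR (2 * d) * stepsum d (Rpower (INR n) (1/4)) t) ^ n.
Proof.
  unfold mgf. rewrite Rpow_mult_distr. f_equal.
  - rewrite pow_inv; reflexivity.
  - apply (paths_sum d (Rpower (INR n) (1/4)) t n).
Qed.

Ltac expeq := repeat (apply f_equal2 || (apply f_equal; unfold Rdiv; ring)); try (unfold Rdiv; ring).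

Lemma stepsum2 c t : stepsum 2 c t =
  exp (t 0%nat / c) + exp (- (t 0%nat / c)) + (exp (t 1%nat / c) + exp (- (t 1%nat / c))).
Proof.
  unfold stepsum, inner, step_coord; simpl.
  rewrite !Rplus_0_r, !Rplus_assoc. expeq.
Qed.

Lemma stepsum3 c t : stepsum 3 c t =
  exp (t 0%nat / c) + exp (- (t 0%nat / c)) + (exp (t 1%nat / c) + exp (- (t 1%nat / c)))
  + (exp (t 2%nat / c) + exp (- (t 2%nat / c))).
Proof.
  unfold stepsum, inner, step_coord; simpl.
  rewrite !Rplus_0_r, !Rplus_assoc. expeq.
Qed.

Definition et (u : R) (j : nat) := / INR (fact j) * u ^ j.
Definition ct (w : R) (j : nat) := / INR (fact (2*j)) * w ^ j.
Definition ch (x : R) := (exp x + exp (-x)) / 2.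
Definition E (u : R) := exp u - 1 - u - u^2/2.

Lemma exp_cv u : Un_cv (fun n => sum_f_R0 (et u) n) (exp u).
Proof. unfold exp. destruct (exist_exp u) as [l H]. simpl. exact H. Qed.

Lemma Un_cv_ext u v l : (forall n, u n = v n) -> Un_cv u l -> Un_cv v l.
Proof. intros H Hu eps He. destruct (Hu eps He) as [N HN]. exists N. intros n Hn. rewrite <- H. auto. Qed.

Lemma Un_cv_const c : Un_cv (fun _ => c) c.
Proof. intros eps He. exists 0%nat. intros. unfold R_dist. rewrite Rminus_diag, Rabs_R0. lra. Qed.

Lemma Un_cv_sub u l (g : nat -> nat) : (forall n, (n <= g n)%nat) -> Un_cv u l -> Un_cv (fun n => u (g n)) l.
Proof. intros Hg Hu eps He. destruct (Hu eps He) as [N HN]. exists N. intros n Hn. apply HN. specialize (Hg n). lia. Qed.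

Lemma tail3 f m : sum_f_R0 f (m+3) = f 0%nat + f 1%nat + f 2%nat + sum_f_R0 (fun j => f (j+3)%nat) m.
Proof.
  induction m.
  - simpl. ring.
  - replace (S m + 3)%nat with (S (m+3)) by lia. rewrite !tech5, IHm.
    replace (S m + 3)%nat with (S (m+3)) by lia. ring.
Qed.

Lemma cv_tail f L : Un_cv (fun n => sum_f_R0 f n) L ->
  Un_cv (fun m => sum_f_R0 (fun j => f (j+3)%nat) m) (L - f 0%nat - f 1%nat - f 2%nat).
Proof.
  intros H.
  assert (H1 := Un_cv_sub _ _ (fun m => m+3)%nat ltac:(intros; cbv beta; lia) H). simpl in H1.
  assert (H2 := CV_minus _ _ _ _ H1 (Un_cv_const (f 0%nat + f 1%nat + f 2%nat))).
  eapply Un_cv_ext; [|replace (L - f 0%nat - f 1%nat - f 2%nat) with (L - (f 0%nat + f 1%nat + f 2%nat)) by ring; exact H2].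
  intros n. simpl. rewrite tail3. ring.
Qed.

Lemma E_cv u : Un_cv (fun m => sum_f_R0 (fun j => et u (j+3)%nat) m) (E u).
Proof.
  eapply Un_cv_ext; [intros; reflexivity|].
  replace (E u) with (exp u - et u 0 - et u 1 - et u 2).
  apply cv_tail. apply exp_cv.
  unfold E, et. simpl. field.
Qed.

Lemma pow_neg x n : (- x) ^ n = (if Nat.even n then 1 else -1) * x ^ n.
Proof.
  induction n. simpl; ring.
  simpl pow. rewrite IHn. rewrite Nat.even_succ, <- Nat.negb_even.
  destruct (Nat.even n); simpl; ring.
Qed.

Lemma ch_partial x m :
  (sum_f_R0 (et x) (2*m+1) + sum_f_R0 (et (-x)) (2*m+1)) / 2 = sum_f_R0 (ct (x*x)) m.
Proof.
  induction m.
  - simpl. unfold et, ct. simpl. field.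
  - replace (2 * S m + 1)%nat with (S (S (2*m+1))) by lia.
    rewrite !tech5, <- IHm.
    unfold et, ct. rewrite !pow_neg.
    replace (Nat.even (S (2*m+1))) with true.
    replace (Nat.even (S (S (2*m+1)))) with false.
    replace (S (2*m+1)) with (2 * S m)%nat by lia.
    rewrite pow_mult. simpl (x^2). replace (x*(x*1)) with (x*x) by ring. field. split; apply not_0_INR; apply fact_neq_0.
    { replace (S (S (2*m+1))) with (1 + 2 * (m+1))%nat by lia.
      rewrite Nat.even_add_mul_2. reflexivity. }
    { replace (S (2*m+1)) with (0 + 2 * (m+1))%nat by lia.
      rewrite Nat.even_add_mul_2. reflexivity. }
Qed.

Lemma ch_cv x : Un_cv (fun m => sum_f_R0 (ct (x*x)) m) (ch x).
Proof.
  assert (H := CV_plus _ _ _ _ (exp_cv x) (exp_cv (-x))).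
  assert (H2 := CV_mult _ _ _ _ H (Un_cv_const (/2))).
  assert (H3 := Un_cv_sub _ _ (fun m => 2*m+1)%nat ltac:(intros; cbv beta; lia) H2).
  eapply Un_cv_ext; [|unfold ch; replace ((exp x + exp (- x)) / 2) with ((exp x + exp (- x)) * / 2) by (unfold Rdiv; ring); exact H3].
  intros n. simpl. rewrite <- ch_partial. unfold Rdiv. reflexivity.
Qed.

Lemma ch_tail_cv x : Un_cv (fun m => sum_f_R0 (fun j => ct (x*x) (j+3)%nat) m)
  (ch x - (1 + x^2/2 + x^4/24)).
Proof.
  replace (ch x - (1 + x^2/2 + x^4/24)) with (ch x - ct (x*x) 0 - ct (x*x) 1 - ct (x*x) 2).
  apply cv_tail. apply ch_cv.
  unfold ct. simpl. field.
Qed.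

Lemma sum_nonneg f m : (forall j, 0 <= f j) -> 0 <= sum_f_R0 f m.
Proof. intros H. induction m; simpl; auto. specialize (H (S m)). lra. Qed.

Lemma lim_le_const u l c : (forall n, c <= u n) -> Un_cv u l -> c <= l.
Proof. intros H Hu. apply (@Rle_cv_lim (fun _ => c) u c l H); auto. apply Un_cv_const. Qed.

Lemma ch_lower x : 1 + x^2/2 + x^4/24 <= ch x.
Proof.
  assert (0 <= ch x - (1 + x^2/2 + x^4/24)); [|lra].
  assert (Hj : forall j, 0 <= ct (x*x) (j+3)).
  { intros j. unfold ct. apply Rmult_le_pos. left; apply Rinv_0_lt_compat, lt_0_INR, lt_O_fact.
    apply pow_le. nra. }
  apply (lim_le_const _ _ 0 (fun m => sum_nonneg _ m Hj) (ch_tail_cv x)).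
Qed.

Lemma E_nonneg_terms u j : 0 <= u -> 0 <= et u j.
Proof. intros. unfold et. apply Rmult_le_pos. left; apply Rinv_0_lt_compat, lt_0_INR, lt_O_fact. apply pow_le; auto. Qed.

Lemma E_lower u : 0 <= u -> u^3/6 <= E u.
Proof.
  intros Hu. eapply lim_le_const; [|apply E_cv]. intros n. cbv beta.
  induction n. simpl. unfold et. simpl. lra.
  rewrite tech5. assert (0 <= et u (S n + 3)) by (apply E_nonneg_terms; auto). lra.
Qed.

Lemma E_nonneg u : 0 <= u -> 0 <= E u.
Proof. intros Hu. assert (0 <= u^3/6) by (apply Rmult_le_pos; [apply pow_le|]; lra). pose proof (E_lower u Hu). lra. Qed.

Lemma pow_add_le a b k : 0 <= a -> 0 <= b -> (1 <= k)%nat -> a^k + b^k <= (a+b)^k.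
Proof.
  intros Ha Hb Hk. induction k. lia.
  destruct k. simpl. lra.
  assert (IH := IHk ltac:(lia)). rewrite <- !(tech_pow_Rmult _ (S k)).
  assert (0 <= a ^ S k) by (apply pow_le; auto). assert (0 <= b ^ S k) by (apply pow_le; auto).
  assert ((a+b)*(a^S k + b^S k) <= (a+b)*(a+b)^S k) by (apply Rmult_le_compat_l; lra).
  assert (0 <= a * b^S k) by (apply Rmult_le_pos; auto). assert (0 <= b * a^S k) by (apply Rmult_le_pos; auto).
  nra.
Qed.

Lemma E_super a b : 0 <= a -> 0 <= b -> E a + E b <= E (a + b).
Proof.
  intros Ha Hb. eapply Rle_cv_lim; [|apply (CV_plus _ _ _ _ (E_cv a) (E_cv b))|apply (E_cv (a+b))].
  intros n. cbv beta. rewrite <- plus_sum. apply sum_Rle. intros j _. unfold et.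
  rewrite <- Rmult_plus_distr_l. apply Rmult_le_compat_l.
  left; apply Rinv_0_lt_compat, lt_0_INR, lt_O_fact. apply pow_add_le; auto; lia.
Qed.

Lemma fact_shift3 j : (6 * fact j <= fact (j+3))%nat.
Proof.
  replace (j+3)%nat with (S (S (S j))) by lia. rewrite !fact_simpl. nia.
Qed.

Lemma E_cub u : 0 <= u -> E u <= u^3 * exp u / 6.
Proof.
  intros Hu.
  assert (H := CV_mult _ _ _ _ (Un_cv_const (u^3/6)) (exp_cv u)).
  replace (u^3 * exp u / 6) with (u^3/6 * exp u) by (unfold Rdiv; ring).
  eapply Rle_cv_lim; [|apply (E_cv u)|apply H].
  intros n. cbv beta. rewrite scal_sum. apply sum_Rle. intros j _. unfold et.
  rewrite pow_add.
  assert (Hf : 6 * INR (fact j) <= INR (fact (j+3))).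
  { replace 6 with (INR 6) by (simpl; ring). rewrite <- mult_INR. apply le_INR. apply fact_shift3. }
  assert (0 < INR (fact j)) by apply lt_0_INR, lt_O_fact.
  assert (0 <= u ^ j) by (apply pow_le; auto). assert (0 <= u ^ 3) by (apply pow_le; auto).
  replace (/ INR (fact j) * u ^ j * (u ^ 3 / 6)) with ((u^j * u^3) * / (6 * INR (fact j))) by (field; lra).
  rewrite Rmult_comm. apply Rmult_le_compat_l. nra.
  apply Rinv_le_contravar; lra.
Qed.

Lemma fact_ratio d j : (d = 2 \/ d = 3)%nat ->
  (5 * ((2*d)^(j+3) * fact (j+3)) <= 3 * d * fact (2*(j+3)))%nat.
Proof.
  intros Hd. induction j.
  - destruct Hd; subst; simpl; lia.
  - replace (S j + 3)%nat with (S (j+3)) by lia.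
    replace (2 * S (j+3))%nat with (S (S (2*(j+3)))) by lia.
    rewrite Nat.pow_succ_r', !fact_simpl.
    assert (2*d <= S (2*(j+3)))%nat by lia.
    set (A := ((2*d)^(j+3) * fact (j+3))%nat) in *.
    set (B := fact (2*(j+3))) in *.
    replace (5 * (2 * d * (2 * d) ^ (j + 3) * (S (j + 3) * fact (j + 3))))%nat
      with (2 * d * S (j+3) * (5 * A))%nat by (unfold A; ring).
    replace (3 * d * (S (S (2 * (j + 3))) * (S (2 * (j + 3)) * B)))%nat
      with ((S (S (2 * (j + 3))) * S (2 * (j + 3))) * (3 * d * B))%nat by ring.
    apply Nat.mul_le_mono; [nia|exact IHj].
Qed.

Lemma ch_upper d x : (d = 2 \/ d = 3)%nat ->
  ch x <= 1 + x^2/2 + x^4/24 + 3/5 * INR d * E (x^2 / (2 * INR d)).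
Proof.
  intros Hd.
  assert (Hd0 : 0 < INR d) by (destruct Hd; subst; simpl; lra).
  assert (H := CV_mult _ _ _ _ (Un_cv_const (3/5 * INR d)) (E_cv (x^2/(2*INR d)))).
  assert (ch x - (1 + x^2/2 + x^4/24) <= 3/5 * INR d * E (x^2 / (2 * INR d))); [|lra].
  eapply Rle_cv_lim; [|apply ch_tail_cv|apply H].
  intros n. cbv beta. rewrite scal_sum. apply sum_Rle. intros j _. unfold et, ct.
  set (w := x*x). assert (Hw : 0 <= w) by (unfold w; nra).
  replace (x^2) with w by (unfold w; ring).
  assert (Hr := fact_ratio d j Hd).
  apply le_INR in Hr. rewrite !mult_INR, pow_INR in Hr. rewrite mult_INR in Hr.
  replace (INR (2*d)) with (2 * INR d) in Hr by (rewrite mult_INR; simpl; ring).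
  set (k := (j+3)%nat) in *.
  assert (0 < INR (fact k)) by apply lt_0_INR, lt_O_fact.
  assert (0 < INR (fact (2*k))) by apply lt_0_INR, lt_O_fact.
  assert (0 < (2 * INR d)^k) by (apply pow_lt; lra).
  assert (0 <= w^k) by (apply pow_le; auto).
  replace ((w / (2 * INR d)) ^ k) with (w^k * / (2*INR d)^k) by (unfold Rdiv; rewrite (Rpow_mult_distr w), pow_inv; auto).
  replace (INR 5) with 5 in Hr by (simpl; ring). replace (INR 3) with 3 in Hr by (simpl; ring).
  replace (INR 2) with 2 in Hr by (simpl; ring).
  replace (/ INR (fact k) * (w ^ k * / (2 * INR d) ^ k) * (3 / 5 * INR d))
    with (w^k * (3 * INR d / (5 * ((2 * INR d)^k * INR (fact k))))) by (field; lra).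
  replace (/ INR (fact (2 * k)) * w ^ k) with (w^k * / INR (fact (2*k))) by ring.
  apply Rmult_le_compat_l; auto.
  apply Rmult_le_reg_r with (5 * ((2 * INR d)^k * INR (fact k)) * INR (fact (2*k))).
  apply Rmult_lt_0_compat; [|lra]. apply Rmult_lt_0_compat; [lra|]. apply Rmult_lt_0_compat; lra.
  replace (/ INR (fact (2 * k)) * (5 * ((2 * INR d) ^ k * INR (fact k)) * INR (fact (2 * k))))
    with (5 * ((2 * INR d) ^ k * INR (fact k))) by (field; lra).
  replace (3 * INR d / (5 * ((2 * INR d) ^ k * INR (fact k))) *
    (5 * ((2 * INR d) ^ k * INR (fact k)) * INR (fact (2 * k))))
    with (3 * INR d * INR (fact (2*k))) by (field; lra).
  lra.
Qed.

Lemma exp_ge_1x x : 1 + x <= exp x.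
Proof. apply exp_ineq1_le. Qed.

Lemma exp_le1 x : x <= 0 -> exp x <= 1.
Proof. intros H. rewrite <- exp_0. destruct (Req_dec x 0). subst; lra. left; apply exp_increasing; lra. Qed.

Lemma e_ge : 8/3 <= exp 1.
Proof. pose proof (E_lower 1 ltac:(lra)). unfold E in H. simpl in H. lra. Qed.

Lemma exp_ge_quad v : 0 <= v -> 1 + v + v^2/2 <= exp v.
Proof. intros. pose proof (E_nonneg v H). unfold E in H0. lra. Qed.

Lemma E_exp_lower u : 1 <= u -> 1/16 <= E u * exp (-u).
Proof.
  intros Hu. unfold E.
  assert (Hv := exp_ge_quad (u-1) ltac:(lra)).
  assert (He := e_ge).
  assert (Heu : exp u = exp 1 * exp (u-1)) by (rewrite <- exp_plus; f_equal; ring).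
  assert (Hinv : exp u * exp (-u) = 1) by (rewrite <- exp_plus, Rplus_opp_r, exp_0; auto).
  assert (0 < exp (-u)) by apply exp_pos.
  assert (0 < exp (u-1)) by apply exp_pos.
  assert (1 + u + u^2/2 <= 15/16 * exp u).
  { rewrite Heu. assert (5/2 * exp (u-1) <= 15/16 * (exp 1 * exp (u-1))) by nra.
    assert (1 + u + u^2/2 <= 5/2 * (1 + (u-1) + (u-1)^2/2)) by nra. nra. }
  assert ((exp u - 1 - u - u^2/2) * exp (-u) = 1 - (1 + u + u^2/2) * exp (-u)) by (replace ((exp u - 1 - u - u^2/2) * exp (-u)) with (exp u * exp (-u) - (1 + u + u^2/2) * exp (-u)) by ring; rewrite Hinv; ring).
  rewrite H2. nra.
Qed.

Lemma G_upper A u q : 0 <= u -> A <= exp u - q - 2/5 * E u ->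
  A * exp (-u) <= 1 - q * exp (-u) - 2/5 * E u * exp (-u).
Proof.
  intros Hu H. assert (Hinv : exp u * exp (-u) = 1) by (rewrite <- exp_plus, Rplus_opp_r, exp_0; auto).
  assert (0 < exp (-u)) by apply exp_pos. nra.
Qed.

Lemma G_le1 A u q : 0 <= u -> 0 <= q -> A <= exp u - q - 2/5 * E u -> A * exp (-u) <= 1.
Proof.
  intros Hu Hq H. pose proof (G_upper A u q Hu H). pose proof (E_nonneg u Hu).
  assert (0 < exp (-u)) by apply exp_pos. nra.
Qed.

Lemma G_local A u q : 0 <= u -> u <= 1 -> 0 <= q -> q <= u^2/2 ->
  1 + u + u^2/2 - q <= A -> A <= exp u - q - 2/5 * E u ->
  Rabs (A * exp (-u) - exp (-q)) <= u^3.
Proof.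
  intros Hu Hu1 Hq Hqu H1 H2.
  pose proof (G_upper A u q Hu H2) as U. pose proof (E_nonneg u Hu) as EN.
  assert (Hinv : exp u * exp (-u) = 1) by (rewrite <- exp_plus, Rplus_opp_r, exp_0; auto).
  assert (Pu : 0 < exp (-u)) by apply exp_pos.
  assert (B1 : 1 - q <= exp (-q)) by (pose proof (exp_ge_1x (-q)); lra).
  assert (B2 : exp (-q) <= 1 - q + q^2).
  { assert (1 + q <= exp q) by apply exp_ge_1x.
    assert (exp q * exp (-q) = 1) by (rewrite <- exp_plus, Rplus_opp_r, exp_0; auto).
    assert (0 < exp (-q)) by apply exp_pos.
    assert (exp (-q) * (1 + q) <= 1) by nra.
    assert ((1 - q + q^2) * (1 + q) = 1 + q^3) by ring.
    assert (0 <= q^3) by (apply pow_le; auto). nra. }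
  assert (B3 : 1 - u <= exp (-u)) by (pose proof (exp_ge_1x (-u)); lra).
  assert (B4 : 1 - u^3/6 <= (1 + u + u^2/2) * exp (-u)).
  { pose proof (E_cub u Hu). unfold E in H. nra. }
  assert (Hq2 : q^2 <= u^4/4) by nra.
  assert (0 <= u^3) by (apply pow_le; auto).
  assert (u^4 <= u^3) by (replace (u^4) with (u^3*u) by ring; nra).
  apply Rabs_le. split.
  -
    assert (A * exp (-u) >= (1 + u + u^2/2) * exp (-u) - q * exp (-u)) by nra.
    assert (q * exp (-u) <= q) by (assert (exp (-u) <= 1) by (apply exp_le1; lra); nra).
    nra.
  - assert (q * exp (-u) >= q * (1 - u)) by nra.
    nra.
Qed.

Lemma G_dom A u q : 0 <= u -> u <= 1 -> 0 <= q -> A <= exp u - q - 2/5 * E u ->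
  A * exp (-u) <= exp (- q / 3).
Proof.
  intros Hu Hu1 Hq H. pose proof (G_upper A u q Hu H). pose proof (E_nonneg u Hu).
  assert (0 < exp (-u)) by apply exp_pos.
  assert (1/3 <= exp (-u)).
  { assert (exp u <= 3).
    { destruct (Req_dec u 1). subst. pose proof exp_le_3. lra.
      assert (exp u < exp 1) by (apply exp_increasing; lra). pose proof exp_le_3. lra. }
    assert (exp u * exp (-u) = 1) by (rewrite <- exp_plus, Rplus_opp_r, exp_0; auto). nra. }
  pose proof (exp_ge_1x (-q/3)). nra.
Qed.

Lemma G_tail A u q : 1 <= u -> 0 <= q -> A <= exp u - q - 2/5 * E u ->
  A * exp (-u) <= 39/40.
Proof.
  intros Hu Hq H. pose proof (G_upper A u q ltac:(lra) H). pose proof (E_exp_lower u Hu).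
  assert (0 < exp (-u)) by apply exp_pos. nra.
Qed.

Definition A2 s0 s1 := (ch s0 + ch s1) / 2.
Definition u2 s0 s1 := (s0^2 + s1^2) / 4.
Definition q2 s0 s1 := (s0^4 + s1^4 + 6 * s0^2 * s1^2) / 96.
Definition A3 s0 s1 s2 := (ch s0 + ch s1 + ch s2) / 3.
Definition u3 s0 s1 s2 := (s0^2 + s1^2 + s2^2) / 6.
Definition q3 s0 s1 s2 := (s0^2 * s1^2 + s0^2 * s2^2 + s1^2 * s2^2) / 36.

Lemma ch_up2 x : ch x <= 1 + x^2/2 + x^4/24 + 6/5 * E (x^2/4).
Proof.
  pose proof (ch_upper 2 x (or_introl eq_refl)). simpl INR in H.
  replace (2 * (1 + 1)) with 4 in H by ring. replace (3/5*(1+1)) with (6/5) in H by field. exact H.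
Qed.
Lemma ch_up3 x : ch x <= 1 + x^2/2 + x^4/24 + 9/5 * E (x^2/6).
Proof.
  pose proof (ch_upper 3 x (or_intror eq_refl)). simpl INR in H.
  replace (2 * (1 + 1 + 1)) with 6 in H by ring. replace (3/5*(1+1+1)) with (9/5) in H by field. exact H.
Qed.

Lemma A2_lower s0 s1 : 1 + u2 s0 s1 + (u2 s0 s1)^2/2 - q2 s0 s1 <= A2 s0 s1.
Proof. pose proof (ch_lower s0). pose proof (ch_lower s1). unfold A2, u2, q2. nra. Qed.

Lemma A2_upper s0 s1 : A2 s0 s1 <= exp (u2 s0 s1) - q2 s0 s1 - 2/5 * E (u2 s0 s1).
Proof.
  pose proof (ch_up2 s0). pose proof (ch_up2 s1).
  pose proof (E_super (s0^2/4) (s1^2/4) ltac:(nra) ltac:(nra)).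
  replace (s0^2/4 + s1^2/4) with (u2 s0 s1) in H1 by (unfold u2; field).
  assert (HE : exp (u2 s0 s1) = E (u2 s0 s1) + 1 + u2 s0 s1 + (u2 s0 s1)^2/2) by (unfold E; ring).
  rewrite HE. unfold A2. unfold u2, q2 in *. nra.
Qed.

Lemma A3_lower s0 s1 s2 : 1 + u3 s0 s1 s2 + (u3 s0 s1 s2)^2/2 - q3 s0 s1 s2 <= A3 s0 s1 s2.
Proof. pose proof (ch_lower s0). pose proof (ch_lower s1). pose proof (ch_lower s2). unfold A3, u3, q3. nra. Qed.

Lemma A3_upper s0 s1 s2 : A3 s0 s1 s2 <= exp (u3 s0 s1 s2) - q3 s0 s1 s2 - 2/5 * E (u3 s0 s1 s2).
Proof.
  pose proof (ch_up3 s0). pose proof (ch_up3 s1). pose proof (ch_up3 s2).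
  pose proof (E_super (s0^2/6) (s1^2/6) ltac:(nra) ltac:(nra)).
  pose proof (E_super (s0^2/6 + s1^2/6) (s2^2/6) ltac:(nra) ltac:(nra)).
  replace (s0^2/6 + s1^2/6 + s2^2/6) with (u3 s0 s1 s2) in H3 by (unfold u3; field).
  assert (HE : exp (u3 s0 s1 s2) = E (u3 s0 s1 s2) + 1 + u3 s0 s1 s2 + (u3 s0 s1 s2)^2/2) by (unfold E; ring).
  rewrite HE. unfold A3. unfold u3, q3 in *. nra.
Qed.

Lemma u2_nonneg s0 s1 : 0 <= u2 s0 s1. Proof. unfold u2; nra. Qed.
Lemma u3_nonneg s0 s1 s2 : 0 <= u3 s0 s1 s2. Proof. unfold u3; nra. Qed.
Lemma q2_nonneg s0 s1 : 0 <= q2 s0 s1. Proof. unfold q2. assert (0 <= s0^2*s1^2) by nra. nra. Qed.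
Lemma q3_nonneg s0 s1 s2 : 0 <= q3 s0 s1 s2. Proof. unfold q3. assert (0 <= s0^2*s1^2) by nra. assert (0 <= s0^2*s2^2) by nra. assert (0 <= s1^2*s2^2) by nra. nra. Qed.
Lemma q2_le s0 s1 : q2 s0 s1 <= (u2 s0 s1)^2/2. Proof. unfold q2, u2. nra. Qed.
Lemma q3_le s0 s1 s2 : q3 s0 s1 s2 <= (u3 s0 s1 s2)^2/2. Proof. unfold q3, u3. nra. Qed.

Definition cn (n : nat) := Rpower (INR n) (1/4).

Lemma cn_pos n : 0 < cn n.
Proof. unfold cn, Rpower. apply exp_pos. Qed.

Lemma cn_sq n : (1 <= n)%nat -> cn n ^ 2 = sqrt (INR n).
Proof.
  intros Hn. assert (0 < INR n) by (apply lt_0_INR; lia).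
  unfold cn. rewrite <- Rpower_pow by (unfold Rpower; apply exp_pos).
  rewrite Rpower_mult. rewrite <- Rpower_sqrt by auto. f_equal. simpl. field.
Qed.

Lemma cn_4 n : (1 <= n)%nat -> cn n ^ 4 = INR n.
Proof.
  intros Hn. assert (0 < INR n) by (apply lt_0_INR; lia).
  unfold cn. rewrite <- Rpower_pow by (unfold Rpower; apply exp_pos).
  rewrite Rpower_mult. replace (1/4 * INR 4) with 1 by (simpl; field). apply Rpower_1; auto.
Qed.

Lemma exp_pow x n : exp x ^ n = exp (INR n * x).
Proof.
  induction n. simpl. rewrite Rmult_0_l, exp_0. auto.
  rewrite S_INR. simpl pow. rewrite IHn, <- exp_plus. f_equal. ring.
Qed.

Definition F2 s0 s1 := A2 s0 s1 * exp (- u2 s0 s1).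
Definition F3 s0 s1 s2 := A3 s0 s1 s2 * exp (- u3 s0 s1 s2).

Lemma sqrt_n_eq n : (1 <= n)%nat -> INR n / cn n ^ 2 = sqrt (INR n).
Proof.
  intros Hn. rewrite cn_sq by auto. assert (0 < INR n) by (apply lt_0_INR; lia).
  assert (0 < sqrt (INR n)) by (apply sqrt_lt_R0; auto).
  pose proof (sqrt_sqrt (INR n) ltac:(lra)). field_simplify; [|lra]. rewrite <- H1 at 1. field. lra.
Qed.

Lemma psi_n_2 n t : (1 <= n)%nat ->
  psi_n 2 n t = (F2 (t 0%nat / cn n) (t 1%nat / cn n)) ^ n.
Proof.
  intros Hn. unfold psi_n. rewrite mgf_eq. fold (cn n). rewrite stepsum2.
  unfold F2. rewrite (Rpow_mult_distr (A2 _ _)), exp_pow. f_equal.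
  - f_equal. unfold A2, ch. simpl. field.
  - f_equal. unfold norm2, inner, u2. simpl.
    pose proof (sqrt_n_eq n Hn). pose proof (cn_pos n).
    rewrite <- H. field. lra.
Qed.

Lemma psi_n_3 n t : (1 <= n)%nat ->
  psi_n 3 n t = (F3 (t 0%nat / cn n) (t 1%nat / cn n) (t 2%nat / cn n)) ^ n.
Proof.
  intros Hn. unfold psi_n. rewrite mgf_eq. fold (cn n). rewrite stepsum3.
  unfold F3. rewrite (Rpow_mult_distr (A3 _ _ _)), exp_pow. f_equal.
  - f_equal. unfold A3, ch. simpl. field.
  - f_equal. unfold norm2, inner, u3. simpl.
    pose proof (sqrt_n_eq n Hn). pose proof (cn_pos n).
    rewrite <- H. field. lra.
Qed.

Lemma psi_2 t : psi 2 t = exp (- q2 (t 0%nat) (t 1%nat)).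
Proof. unfold psi, q2. simpl. f_equal. field. Qed.
Lemma psi_3 t : psi 3 t = exp (- q3 (t 0%nat) (t 1%nat) (t 2%nat)).
Proof. unfold psi, q3. simpl. f_equal. field. Qed.

Lemma q2_scale n a b : (1 <= n)%nat -> q2 a b = INR n * q2 (a / cn n) (b / cn n).
Proof. intros Hn. rewrite <- (cn_4 n Hn). pose proof (cn_pos n). unfold q2. field. lra. Qed.
Lemma q3_scale n a b c : (1 <= n)%nat -> q3 a b c = INR n * q3 (a / cn n) (b / cn n) (c / cn n).
Proof. intros Hn. rewrite <- (cn_4 n Hn). pose proof (cn_pos n). unfold q3. field. lra. Qed.

Lemma psi_2' n t : (1 <= n)%nat -> psi 2 t = exp (- q2 (t 0%nat / cn n) (t 1%nat / cn n)) ^ n.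
Proof. intros Hn. rewrite psi_2, exp_pow, (q2_scale n) by auto. f_equal. ring. Qed.
Lemma psi_3' n t : (1 <= n)%nat -> psi 3 t = exp (- q3 (t 0%nat / cn n) (t 1%nat / cn n) (t 2%nat / cn n)) ^ n.
Proof. intros Hn. rewrite psi_3, exp_pow, (q3_scale n) by auto. f_equal. ring. Qed.

From Coquelicot Require Import Coquelicot.
Open Scope R_scope.

Definition C1 (f : R -> R) := forall x, continuous f x.
Definition C2 (f : R -> R -> R) := forall x y, continuous (fun p : R*R => f (fst p) (snd p)) (x,y).
Definition C3 (f : R -> R -> R -> R) :=
  forall x y z, continuous (fun p : R*(R*R) => f (fst p) (fst (snd p)) (snd (snd p))) (x,(y,z)).

Lemma ball_R (x y e : R) : ball x e y <-> Rabs (y - x) < e.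
Proof. reflexivity. Qed.

Lemma C3_eps f : C3 f -> forall x y z eps, 0 < eps -> exists del, 0 < del /\
  forall x' y' z', Rabs (x'-x) < del -> Rabs (y'-y) < del -> Rabs (z'-z) < del ->
  Rabs (f x' y' z' - f x y z) < eps.
Proof.
  intros H x y z eps Heps.
  destruct (proj1 (filterlim_locally _ _) (H x y z) (mkposreal eps Heps)) as [del Hd].
  exists (pos del); split; [apply cond_pos|].
  intros x' y' z' h1 h2 h3. apply (Hd (x',(y',z'))). split; [exact h1| split; [exact h2|exact h3]].
Qed.

Lemma C2_eps f : C2 f -> forall x y eps, 0 < eps -> exists del, 0 < del /\
  forall x' y', Rabs (x'-x) < del -> Rabs (y'-y) < del ->
  Rabs (f x' y' - f x y) < eps.
Proof.
  intros H x y eps Heps.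
  destruct (proj1 (filterlim_locally _ _) (H x y) (mkposreal eps Heps)) as [del Hd].
  exists (pos del); split; [apply cond_pos|].
  intros x' y' h1 h2. apply (Hd (x',y')). split; [exact h1|exact h2].
Qed.

Lemma C2_of_eps f : (forall x y eps, 0 < eps -> exists del, 0 < del /\
  forall x' y', Rabs (x'-x) < del -> Rabs (y'-y) < del ->
  Rabs (f x' y' - f x y) < eps) -> C2 f.
Proof.
  intros H x y. apply filterlim_locally. intros eps.
  destruct (H x y eps (cond_pos eps)) as [del [Hd H']].
  exists (mkposreal del Hd). intros [x' y'] [h1 h2]. apply H'; assumption.
Qed.

Lemma C1_of_eps f : (forall x eps, 0 < eps -> exists del, 0 < del /\
  forall x', Rabs (x'-x) < del -> Rabs (f x' - f x) < eps) -> C1 f.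
Proof.
  intros H x. apply filterlim_locally. intros eps.
  destruct (H x eps (cond_pos eps)) as [del [Hd H']].
  exists (mkposreal del Hd). intros x' h1. apply H'; assumption.
Qed.

Lemma C3_const c : C3 (fun _ _ _ => c).
Proof. intros x y z. apply continuous_const. Qed.
Lemma C3_p0 : C3 (fun x _ _ => x).
Proof. intros x y z. apply continuous_fst. Qed.
Lemma C3_p1 : C3 (fun _ y _ => y).
Proof. intros x y z. apply (continuous_comp snd fst). apply continuous_snd. apply continuous_fst. Qed.
Lemma C3_p2 : C3 (fun _ _ z => z).
Proof. intros x y z. apply (continuous_comp snd snd). apply continuous_snd. apply continuous_snd. Qed.
Lemma C3_plus f g : C3 f -> C3 g -> C3 (fun x y z => f x y z + g x y z).
Proof. intros Hf Hg x y z. apply (continuous_plus _ _ _ (Hf x y z) (Hg x y z)). Qed.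
Lemma C3_mult f g : C3 f -> C3 g -> C3 (fun x y z => f x y z * g x y z).
Proof. intros Hf Hg x y z. apply (continuous_mult _ _ _ (Hf x y z) (Hg x y z)). Qed.
Lemma C3_comp (h : R -> R) f : C1 h -> C3 f -> C3 (fun x y z => h (f x y z)).
Proof. intros Hh Hf x y z. apply (continuous_comp _ h _ (Hf x y z)). apply Hh. Qed.
Lemma C3_opp f : C3 f -> C3 (fun x y z => - f x y z).
Proof. intros Hf. apply (C3_comp Ropp). intros u. apply (continuous_opp (fun v:R => v)). apply continuous_id. exact Hf. Qed.
Lemma C3_minus f g : C3 f -> C3 g -> C3 (fun x y z => f x y z - g x y z).
Proof. intros; apply C3_plus; auto; apply C3_opp; auto. Qed.
Lemma C1_exp : C1 exp.
Proof. intros x. apply continuous_exp. Qed.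
Lemma C1_abs : C1 Rabs.
Proof. intros x. apply continuous_Rabs. Qed.
Lemma C3_pow f n : C3 f -> C3 (fun x y z => f x y z ^ n).
Proof. intros Hf; induction n; simpl. apply C3_const. apply C3_mult; auto. Qed.
Lemma C1_inv_pos (f : R -> R) : C1 f -> (forall x, 0 < f x) -> C1 (fun x => / f x).
Proof.
  intros Hf Hp x. apply (continuous_comp f Rinv). apply Hf.
  apply continuity_pt_filterlim. apply continuity_pt_inv. apply continuity_pt_id.
  unfold id. specialize (Hp x). lra.
Qed.
Lemma C3_inv f : C3 f -> (forall x y z, 0 < f x y z) -> C3 (fun x y z => / f x y z).
Proof.
  intros Hf Hp x y z.
  apply (continuous_comp _ Rinv _ (Hf x y z)).
  apply continuity_pt_filterlim. apply continuity_pt_inv. apply continuity_pt_id.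
  unfold id. simpl. specialize (Hp x y z). lra.
Qed.

Lemma C3_perm f (p : R*(R*R) -> R*(R*R)) :
  (forall q, continuous p q) ->
  C3 f -> forall g, (forall x y z, g x y z = f (fst (p (x,(y,z)))) (fst (snd (p (x,(y,z))))) (snd (snd (p (x,(y,z)))))) -> C3 g.
Proof.
  intros Hp Hf g Hg x y z.
  apply (continuous_ext (fun q => f (fst (p q)) (fst (snd (p q))) (snd (snd (p q))))).
  { intros [a [b c]]. rewrite Hg. reflexivity. }
  apply (continuous_comp p (fun q => f (fst q) (fst (snd q)) (snd (snd q)))). apply Hp.
  destruct (p (x,(y,z))) as [a [b c]]. apply Hf.
Qed.

Lemma cont_pair {U : UniformSpace} (f g : U -> R) q : continuous f q -> continuous g q ->
  continuous (fun q => (f q, g q)) q.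
Proof.
  intros Hf Hg. apply filterlim_locally. intros eps.
  pose proof (proj1 (filterlim_locally _ _) Hf eps) as A.
  pose proof (proj1 (filterlim_locally _ _) Hg eps) as B.
  generalize (filter_and _ _ A B). apply filter_imp. intros x [h1 h2]. split; assumption.
Qed.

Lemma cont_pair' {U : UniformSpace} (f : U -> R) (g : U -> R*R) q : continuous f q -> continuous g q ->
  continuous (fun q => (f q, g q)) q.
Proof.
  intros Hf Hg. apply filterlim_locally. intros eps.
  pose proof (proj1 (filterlim_locally _ _) Hf eps) as A.
  pose proof (proj1 (filterlim_locally _ _) Hg eps) as B.
  generalize (filter_and _ _ A B). apply filter_imp. intros x [h1 h2]. split; assumption.
Qed.

Lemma cont_triple (f g h : R*(R*R) -> R) q : continuous f q -> continuous g q -> continuous h q ->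
  continuous (fun q => (f q, (g q, h q))) q.
Proof.
  intros Hf Hg Hh. apply cont_pair'. exact Hf. apply cont_pair; assumption.
Qed.

Lemma cproj0 (q : R*(R*R)) : continuous (fun q : R*(R*R) => fst q) q.
Proof. destruct q; apply continuous_fst. Qed.
Lemma cproj1 (q : R*(R*R)) : continuous (fun q : R*(R*R) => fst (snd q)) q.
Proof. destruct q as [a [b c]]. apply (continuous_comp snd fst). apply continuous_snd. apply continuous_fst. Qed.
Lemma cproj2 (q : R*(R*R)) : continuous (fun q : R*(R*R) => snd (snd q)) q.
Proof. destruct q as [a [b c]]. apply (continuous_comp snd snd). apply continuous_snd. apply continuous_snd. Qed.

Lemma C3_swap01 f : C3 f -> C3 (fun x y z => f y x z).
Proof.
  intros Hf. apply (C3_perm f (fun q => (fst (snd q), (fst q, snd (snd q))))); auto.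
  intros q. apply cont_triple; [apply cproj1|apply cproj0|apply cproj2].
Qed.
Lemma C3_swap12 f : C3 f -> C3 (fun x y z => f x z y).
Proof.
  intros Hf. apply (C3_perm f (fun q => (fst q, (snd (snd q), fst (snd q))))); auto.
  intros q. apply cont_triple; [apply cproj0|apply cproj2|apply cproj1].
Qed.
Lemma C3_swap02 f : C3 f -> C3 (fun x y z => f z y x).
Proof.
  intros Hf. apply (C3_perm f (fun q => (snd (snd q), (fst (snd q), fst q)))); auto.
  intros q. apply cont_triple; [apply cproj2|apply cproj1|apply cproj0].
Qed.

Lemma C3_of_C2 f : C2 f -> C3 (fun x y z => f x y).
Proof.
  intros Hf x y z.
  apply (continuous_comp (fun q : R*(R*R) => (fst q, fst (snd q))) (fun p : R*R => f (fst p) (snd p))).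
  apply cont_pair; [apply cproj0|apply cproj1]. apply Hf.
Qed.

Lemma C2_of_C3 f c : C3 f -> C2 (fun x y => f x y c).
Proof.
  intros Hf x y.
  apply (continuous_comp (fun p : R*R => (fst p, (snd p, c))) (fun q : R*(R*R) => f (fst q) (fst (snd q)) (snd (snd q)))).
  destruct (x,y) as [a b] eqn:E. apply cont_pair'. apply continuous_fst.
  apply cont_pair. apply continuous_snd. apply continuous_const. apply Hf.
Qed.

Lemma C1_of_C2 f c : C2 f -> C1 (fun x => f x c).
Proof.
  intros Hf x.
  apply (continuous_comp (fun x : R => (x, c)) (fun p : R*R => f (fst p) (snd p))).
  apply cont_pair. apply continuous_id. apply continuous_const. apply Hf.
Qed.

Lemma C3_ex_RInt f y z a b : C3 f -> ex_RInt (fun x => f x y z) a b.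
Proof.
  intros Hf. apply (ex_RInt_continuous (V:=R_CompleteNormedModule)). intros x _.
  apply (continuous_comp (fun x : R => (x, (y, z))) (fun q : R*(R*R) => f (fst q) (fst (snd q)) (snd (snd q)))).
  apply cont_pair'. apply continuous_id. apply continuous_const. apply Hf.
Qed.

Lemma C1_ex_RInt f a b : C1 f -> ex_RInt f a b.
Proof. intros Hf. apply (ex_RInt_continuous (V:=R_CompleteNormedModule)). intros; apply Hf. Qed.

Lemma RInt_minusR f g a b : ex_RInt f a b -> ex_RInt g a b ->
  RInt (fun x => f x - g x) a b = RInt f a b - RInt g a b.
Proof. intros; apply (RInt_minus (V:=R_CompleteNormedModule)); auto. Qed.
Lemma RInt_plusR f g a b : ex_RInt f a b -> ex_RInt g a b ->
  RInt (fun x => f x + g x) a b = RInt f a b + RInt g a b.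
Proof. intros; apply (RInt_plus (V:=R_CompleteNormedModule)); auto. Qed.
Lemma RInt_scalR f c a b : ex_RInt f a b ->
  RInt (fun x => c * f x) a b = c * RInt f a b.
Proof. intros; apply (RInt_scal (V:=R_CompleteNormedModule)); auto. Qed.
Lemma ex_RInt_minusR f g a b : ex_RInt f a b -> ex_RInt g a b -> ex_RInt (fun x => f x - g x) a b.
Proof. intros; apply (ex_RInt_minus (V:=R_NormedModule)); auto. Qed.
Lemma ex_RInt_plusR f g a b : ex_RInt f a b -> ex_RInt g a b -> ex_RInt (fun x => f x + g x) a b.
Proof. intros; apply (ex_RInt_plus (V:=R_NormedModule)); auto. Qed.
Lemma ex_RInt_scalR f c a b : ex_RInt f a b -> ex_RInt (fun x => c * f x) a b.
Proof. intros; apply (ex_RInt_scal (V:=R_NormedModule)); auto. Qed.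

Lemma pick_delta (P : R -> R -> Prop) : (forall x, exists d, 0 < d /\ P x d) ->
  { delta : R -> posreal | forall x, P x (delta x) }.
Proof.
  intros H.
  assert (H' : forall x, { d : posreal | P x d }).
  { intros x. apply constructive_indefinite_description.
    destruct (H x) as [d [Hd Pd]]. exists (mkposreal d Hd). exact Pd. }
  exists (fun x => proj1_sig (H' x)). intros x. apply (proj2_sig (H' x)).
Qed.

Lemma P32 f a b : C3 f -> a <= b -> C2 (fun y z => RInt (fun x => f x y z) a b).
Proof.
  intros Hf Hab. apply C2_of_eps. intros y z eps Heps.
  set (e' := eps / (b - a + 1)).
  assert (He' : 0 < e') by (unfold e'; apply Rdiv_lt_0_compat; lra).
  destruct (pick_delta (fun x d => forall x' y' z', Rabs (x'-x) < d -> Rabs (y'-y) < d -> Rabs (z'-z) < d ->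
     Rabs (f x' y' z' - f x y z) < e'/2)) as [delta Hdel].
  { intros x. apply (C3_eps f Hf x y z (e'/2)). lra. }
  destruct (compactness_value_1d a b delta) as [dd Hdd].
  exists dd. split; [apply cond_pos|]. intros y' z' hy hz.
  assert (Hpt : forall x, a <= x <= b -> Rabs (f x y' z' - f x y z) <= e').
  { intros x Hx. apply NNPP. intros Hn. apply (Hdd x (conj (proj1 Hx) (proj2 Hx))).
    intros [t [Ht [Hxt Hdt]]]. apply Hn.
    assert (A1 := Hdel t x y' z' Hxt ltac:(lra) ltac:(lra)).
    assert (A2 := Hdel t x y z Hxt ltac:(rewrite Rminus_diag, Rabs_R0; apply cond_pos) ltac:(rewrite Rminus_diag, Rabs_R0; apply cond_pos)).
    apply Rabs_le_between'. apply Rabs_lt_between' in A1. apply Rabs_lt_between' in A2. lra. }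
  rewrite <- RInt_minusR by (apply C3_ex_RInt; exact Hf).
  eapply Rle_lt_trans. apply abs_RInt_le_const. exact Hab.
  apply ex_RInt_minusR; apply C3_ex_RInt; exact Hf.
  intros t Ht. apply (Hpt t Ht).
  assert (E: e' * (b - a + 1) = eps) by (unfold e'; field; lra). nra.
Qed.

Lemma P21 f a b : C2 f -> a <= b -> C1 (fun y => RInt (fun x => f x y) a b).
Proof.
  intros Hf Hab. apply (C1_of_C2 (fun y z => RInt (fun x => f x y) a b) 0).
  apply (P32 (fun x y z => f x y)). apply C3_of_C2; auto. auto.
Qed.

Lemma C2_ex_RInt f y a b : C2 f -> ex_RInt (fun x => f x y) a b.
Proof. intros Hf. apply (C3_ex_RInt (fun x y z => f x y) y 0). apply C3_of_C2; auto. Qed.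

Lemma C2_swap f : C2 f -> C2 (fun x y => f y x).
Proof. intros Hf. apply (C2_of_C3 (fun x y z => f y x) 0). apply (C3_swap01 (fun x y z => f x y)). apply C3_of_C2; auto. Qed.

Lemma P32' f a b : C3 f -> C2 (fun y z => RInt (fun x => f x y z) a b).
Proof.
  intros Hf. destruct (Rle_dec a b) as [H|H]. apply P32; auto.
  assert (C2 (fun y z => - RInt (fun x => f x y z) b a)).
  { apply (C2_of_C3 (fun y z _ => - RInt (fun x => f x y z) b a) 0).
    apply (C3_opp (fun y z _ => RInt (fun x => f x y z) b a)). apply C3_of_C2. apply P32; auto; lra. }
  intros x y. eapply continuous_ext; [|apply H0]. intros [u v]; simpl.
  rewrite <- (opp_RInt_swap (V:=R_CompleteNormedModule)).
  change (opp (RInt (fun x : R => f x u v) a b)) with (- RInt (fun x : R => f x u v) a b). ring.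
  apply C3_ex_RInt; auto.
Qed.

Lemma P21' f a b : C2 f -> C1 (fun y => RInt (fun x => f x y) a b).
Proof.
  intros Hf. apply (C1_of_C2 (fun y z => RInt (fun x => f x y) a b) 0).
  apply (P32' (fun x y z => f x y)). apply C3_of_C2; auto.
Qed.

Lemma C2_cont2d f : C2 f -> forall x y, continuity_2d_pt f x y.
Proof. intros Hf x y. apply continuity_2d_pt_filterlim. apply Hf. Qed.

Lemma fubini2 f a b c e : C2 f -> c <= e ->
  RInt (fun y => RInt (fun x => f x y) a b) c e = RInt (fun x => RInt (fun y => f x y) c e) a b.
Proof.
  intros Hf Hce.
  set (h := fun z => RInt (fun x => f x z) a b).
  assert (Hh : C1 h) by (apply P21'; auto).
  set (Psi := fun z => RInt h c z).
  set (Phi := fun z => RInt (fun x => RInt (fun y => f x y) c z) a b).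
  assert (Hfs : C2 (fun x y => f y x)) by (apply C2_swap; auto).
  assert (DPsi : forall z, is_derive Psi z (h z)).
  { intros z. apply (is_derive_RInt (V:=R_CompleteNormedModule) h Psi c z).
    apply filter_forall. intros z'. apply RInt_correct. apply C1_ex_RInt; auto. apply Hh. }
  assert (DG : forall t u, is_derive (fun u => RInt (fun y => f t y) c u) u (f t u)).
  { intros t u. apply (is_derive_RInt (V:=R_CompleteNormedModule) (fun y => f t y) _ c u).
    apply filter_forall. intros z'. apply RInt_correct. apply (C1_ex_RInt (fun y => f t y)).
    apply (C1_of_C2 (fun y x => f x y) t). auto.
    apply (C1_of_C2 (fun y x => f x y) t). auto. }
  assert (DPhi : forall z, is_derive Phi z (h z)).
  { intros z.
    assert (E: h z = RInt (fun t => Derive (fun u => RInt (fun y => f t y) c u) z) a b).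
    { unfold h. apply RInt_ext. intros t _. symmetry. apply is_derive_unique. apply DG. }
    rewrite E. unfold Phi.
    apply (is_derive_RInt_param (fun u t => RInt (fun y => f t y) c u) a b z).
    - apply filter_forall. intros u t _. eexists. apply DG.
    - intros t _. apply (continuity_2d_pt_ext (fun u v => f v u)).
      intros u v. symmetry. apply is_derive_unique. apply DG.
      apply C2_cont2d. auto.
    - apply filter_forall. intros u. apply C1_ex_RInt.
      apply (P21' (fun y t => f t y)). apply C2_swap. exact Hf. }
  destruct (Req_dec c e) as [Hq|Hq].
  - subst e. transitivity 0. apply (RInt_point (V:=R_CompleteNormedModule)).
    symmetry. rewrite (RInt_ext _ (fun _ => 0)).
    rewrite (RInt_const (V:=R_CompleteNormedModule)). unfold scal; simpl. unfold mult; simpl. ring.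
    intros x _. apply (RInt_point (V:=R_CompleteNormedModule)).
  - assert (Z : Phi c - Psi c = Phi e - Psi e).
    { assert (Z' : minus (Phi c) (Psi c) = minus (Phi e) (Psi e)).
      { apply (eq_is_derive (fun z => minus (Phi z) (Psi z))).
        intros t _. assert (D := is_derive_minus Phi Psi t (h t) (h t) (DPhi t) (DPsi t)).
        rewrite minus_eq_zero in D. exact D. lra. }
      exact Z'. }
    assert (P0 : Phi c = 0).
    { unfold Phi. rewrite (RInt_ext _ (fun _ => 0)). rewrite (RInt_const (V:=R_CompleteNormedModule)). unfold scal; simpl; unfold mult; simpl; ring.
      intros x _. apply (RInt_point (V:=R_CompleteNormedModule)). }
    assert (P1 : Psi c = 0) by (unfold Psi; apply (RInt_point (V:=R_CompleteNormedModule))).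
    unfold Psi, Phi in *. lra.
Qed.

Fixpoint Ival (k : nat) (F : (nat -> R) -> R) (r : R) : R :=
  match k with
  | O => F (fun _ => 0)
  | S k' => RInt (fun x => Ival k' (fun v => F (upd v k' x)) r) (-r) r
  end.

Lemma isRInt_unique g a b l : Defs.is_RInt g a b l -> l = RInt g a b.
Proof. intros [pr Hpr]. rewrite (RInt_Reals g a b pr). auto. Qed.

Lemma isRInt_of_ex g a b : ex_RInt g a b -> Defs.is_RInt g a b (RInt g a b).
Proof. intros H. exists (ex_RInt_Reals_0 _ _ _ H). symmetry. apply RInt_Reals. Qed.

Lemma box_unique k : forall F r l, box_int k F r l -> l = Ival k F r.
Proof.
  induction k; intros F r l H; simpl in *.
  - exact H.
  - destruct H as [g [Hg Hl]]. apply isRInt_unique in Hl. rewrite Hl.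
    apply RInt_ext. intros x _. apply IHk. apply Hg.
Qed.

Definition I2 (f : R -> R -> R) r := RInt (fun y => RInt (fun x => f x y) (-r) r) (-r) r.
Definition I3 (f : R -> R -> R -> R) r :=
  RInt (fun z => RInt (fun y => RInt (fun x => f x y z) (-r) r) (-r) r) (-r) r.

Definition vec2 a b := upd (upd (fun _ => 0) 0 a) 1 b.
Definition vec3 a b c := upd (upd (upd (fun _ => 0) 0 a) 1 b) 2 c.

Lemma Ival2 F r : Ival 2 F r = I2 (fun a b => F (vec2 a b)) r.
Proof. reflexivity. Qed.
Lemma Ival3 F r : Ival 3 F r = I3 (fun a b c => F (vec3 a b c)) r.
Proof. reflexivity. Qed.

Lemma box_exists2 F r : C2 (fun a b => F (vec2 a b)) -> box_int 2 F r (Ival 2 F r).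
Proof.
  intros Hf. simpl.
  exists (fun x => RInt (fun y => F (upd (upd (fun _ => 0) 0 y) 1 x)) (-r) r). split.
  - intros x. exists (fun y => F (upd (upd (fun _ => 0) 0 y) 1 x)). split.
    + intros y. reflexivity.
    + apply isRInt_of_ex. apply (C2_ex_RInt (fun a b => F (vec2 a b))). exact Hf.
  - apply isRInt_of_ex. apply C1_ex_RInt. apply (P21' (fun a b => F (vec2 a b))). exact Hf.
Qed.

Lemma box_exists3 F r : C3 (fun a b c => F (vec3 a b c)) -> box_int 3 F r (Ival 3 F r).
Proof.
  intros Hf. simpl.
  eexists. split.
  - intros x. eexists. split.
    + intros y. eexists. split.
      * intros z. reflexivity.
      * apply isRInt_of_ex. apply (C3_ex_RInt (fun a b c => F (vec3 a b c))). exact Hf.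
    + apply isRInt_of_ex. apply (C2_ex_RInt (fun b c => RInt (fun a => F (vec3 a b c)) (-r) r)).
      apply P32'. exact Hf.
  - apply isRInt_of_ex. apply C1_ex_RInt. apply (P21' (fun b c => RInt (fun a => F (vec3 a b c)) (-r) r)).
    apply P32'. exact Hf.
Qed.

Lemma I2_le f g r : C2 f -> C2 g -> 0 <= r ->
  (forall x y, Rabs x <= r -> Rabs y <= r -> f x y <= g x y) -> I2 f r <= I2 g r.
Proof.
  intros Hf Hg Hr H. unfold I2. apply RInt_le. lra.
  apply C1_ex_RInt, P21'; auto. apply C1_ex_RInt, P21'; auto.
  intros y Hy. apply RInt_le. lra. apply C2_ex_RInt; auto. apply C2_ex_RInt; auto.
  intros x Hx. apply H; apply Rabs_le; lra.
Qed.

Lemma I3_le f g r : C3 f -> C3 g -> 0 <= r ->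
  (forall x y z, Rabs x <= r -> Rabs y <= r -> Rabs z <= r -> f x y z <= g x y z) -> I3 f r <= I3 g r.
Proof.
  intros Hf Hg Hr H. unfold I3. apply RInt_le. lra.
  apply C1_ex_RInt, P21', P32'; auto. apply C1_ex_RInt, P21', P32'; auto.
  intros z Hz. apply RInt_le. lra.
  apply (C2_ex_RInt (fun y z => RInt (fun x => f x y z) (-r) r)), P32'; auto.
  apply (C2_ex_RInt (fun y z => RInt (fun x => g x y z) (-r) r)), P32'; auto.
  intros y Hy. apply RInt_le. lra. apply C3_ex_RInt; auto. apply C3_ex_RInt; auto.
  intros x Hx. apply H; apply Rabs_le; lra.
Qed.

Lemma I3_plus f g r : C3 f -> C3 g -> I3 (fun x y z => f x y z + g x y z) r = I3 f r + I3 g r.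
Proof.
  intros Hf Hg. unfold I3. rewrite <- RInt_plusR.
  apply RInt_ext. intros z _. rewrite <- RInt_plusR.
  apply RInt_ext. intros y _. apply RInt_plusR; apply C3_ex_RInt; auto.
  apply (C2_ex_RInt (fun y z => RInt (fun x => f x y z) (-r) r)), P32'; auto.
  apply (C2_ex_RInt (fun y z => RInt (fun x => g x y z) (-r) r)), P32'; auto.
  apply C1_ex_RInt, P21', P32'; auto. apply C1_ex_RInt, P21', P32'; auto.
Qed.

Lemma I3_scal f c r : C3 f -> I3 (fun x y z => c * f x y z) r = c * I3 f r.
Proof.
  intros Hf. unfold I3. rewrite <- RInt_scalR.
  apply RInt_ext. intros z _. rewrite <- RInt_scalR.
  apply RInt_ext. intros y _. apply RInt_scalR; apply C3_ex_RInt; auto.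
  apply (C2_ex_RInt (fun y z => RInt (fun x => f x y z) (-r) r)), P32'; auto.
  apply C1_ex_RInt, P21', P32'; auto.
Qed.

Lemma I2_plus f g r : C2 f -> C2 g -> I2 (fun x y => f x y + g x y) r = I2 f r + I2 g r.
Proof.
  intros Hf Hg. unfold I2. rewrite <- RInt_plusR.
  apply RInt_ext. intros y _. apply RInt_plusR; apply C2_ex_RInt; auto.
  apply C1_ex_RInt, P21'; auto. apply C1_ex_RInt, P21'; auto.
Qed.

Lemma I2_scal f c r : C2 f -> I2 (fun x y => c * f x y) r = c * I2 f r.
Proof.
  intros Hf. unfold I2. rewrite <- RInt_scalR.
  apply RInt_ext. intros y _. apply RInt_scalR; apply C2_ex_RInt; auto.
  apply C1_ex_RInt, P21'; auto.
Qed.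

Lemma I3_swap_inner f r : C3 f -> 0 <= r ->
  I3 f r = RInt (fun z => RInt (fun x => RInt (fun y => f x y z) (-r) r) (-r) r) (-r) r.
Proof.
  intros Hf Hr. unfold I3. apply RInt_ext. intros z _.
  apply (fubini2 (fun x y => f x y z)). apply C2_of_C3; auto. lra.
Qed.

Lemma I3_swap_outer f r : C3 f -> 0 <= r ->
  I3 f r = RInt (fun y => RInt (fun z => RInt (fun x => f x y z) (-r) r) (-r) r) (-r) r.
Proof.
  intros Hf Hr. unfold I3.
  apply (fubini2 (fun y z => RInt (fun x => f x y z) (-r) r)). apply P32'; auto. lra.
Qed.

Lemma C1_lor k : 0 <= k -> C1 (fun y => / (1 + k * y^2)).
Proof.
  intros Hk. apply C1_inv_pos. intros x.
  apply (continuous_plus (fun _ => 1) (fun y => k * y^2)). apply continuous_const.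
  apply (continuous_mult (fun _ => k) (fun y => y^2)). apply continuous_const.
  apply (continuous_mult (fun y => y) (fun y => y^1)). apply continuous_id.
  apply (continuous_mult (fun y => y) (fun _ => 1)). apply continuous_id. apply continuous_const.
  intros x. nra.
Qed.

Lemma RInt_lor k r : 0 < k -> 0 <= r -> RInt (fun y => / (1 + k * y^2)) (-r) r <= PI / sqrt k.
Proof.
  intros Hk Hr. set (s := sqrt k). assert (Hs : 0 < s) by (apply sqrt_lt_R0; auto).
  assert (Hss : s * s = k) by (apply sqrt_sqrt; lra).
  assert (H : is_RInt (fun y => / (1 + k * y^2)) (-r) r (minus (atan (s * r) / s) (atan (s * (-r)) / s))).
  { apply (is_RInt_derive (fun y => atan (s * y) / s)).
    - intros x _. auto_derive. auto.
      replace (k * x^2) with ((s*x)^2) by (rewrite <- Hss; ring). assert (0 <= (s*x)^2) by (apply pow2_ge_0). field. split; [lra|]. nra.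
    - intros x _. apply (C1_lor k). lra. }
  rewrite (is_RInt_unique _ _ _ _ H). unfold minus, plus, opp; simpl.
  replace (s * - r) with (- (s * r)) by ring. rewrite atan_opp.
  pose proof (atan_bound (s*r)). apply Rmult_le_reg_r with s; auto.
  replace ((atan (s * r) / s + - (- atan (s * r) / s)) * s) with (2 * atan (s*r)) by (field; lra).
  replace (PI / s * s) with PI by (field; lra). lra.
Qed.

Lemma ex_RInt_lor k a b : 0 <= k -> ex_RInt (fun y => / (1 + k * y^2)) a b.
Proof. intros; apply C1_ex_RInt, C1_lor; auto. Qed.

Lemma RInt_extR (f g : R -> R) a b : (forall x, f x = g x) -> RInt f a b = RInt g a b.
Proof. intros H. apply RInt_ext. intros; apply H. Qed.

Definition lor (k y : R) := / (1 + k * y^2).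

Lemma lor_pos k y : 0 <= k -> 0 < lor k y.
Proof. intros. unfold lor. apply Rinv_0_lt_compat. nra. Qed.
Lemma lor_le1 k y : 0 <= k -> lor k y <= 1.
Proof. intros. unfold lor. rewrite <- Rinv_1. apply Rinv_le_contravar; nra. Qed.

Lemma RInt_nonneg f r : 0 <= r -> ex_RInt f (-r) r -> (forall x, 0 <= f x) -> 0 <= RInt f (-r) r.
Proof. intros Hr He H. apply RInt_ge_0; auto. lra. Qed.

Lemma RInt_lor' k r : 0 < k -> 0 <= r -> RInt (lor k) (-r) r <= PI / sqrt k.
Proof. intros. apply RInt_lor; auto. Qed.

Lemma RInt_lor_nonneg k r : 0 <= k -> 0 <= r -> 0 <= RInt (lor k) (-r) r.
Proof. intros. apply RInt_nonneg; auto. apply ex_RInt_lor; auto. intros; left; apply lor_pos; auto. Qed.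

Lemma RInt_lor_sq k r : 0 < k -> 0 <= r -> RInt (lor k) (-r) r * RInt (lor k) (-r) r <= PI^2 / k.
Proof.
  intros Hk Hr. pose proof (RInt_lor' k r Hk Hr). pose proof (RInt_lor_nonneg k r ltac:(lra) Hr).
  assert (Hs : 0 < sqrt k) by (apply sqrt_lt_R0; auto).
  assert (sqrt k * sqrt k = k) by (apply sqrt_sqrt; lra).
  replace (PI^2/k) with (PI^2/(sqrt k * sqrt k)) by (rewrite H1; reflexivity).
  replace (PI^2/(sqrt k * sqrt k)) with ((PI / sqrt k) * (PI / sqrt k)) by (field; lra).
  apply Rmult_le_compat; auto.
Qed.

Lemma RInt2_lor K k r : 0 <= K -> 0 < k -> 0 <= r ->
  RInt (fun b => RInt (fun a => K * (lor k a * lor k b)) (-r) r) (-r) r <= K * (PI^2 / k).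
Proof.
  intros HK Hk Hr.
  rewrite (RInt_extR _ (fun b => (K * RInt (lor k) (-r) r) * lor k b) (-r) r).
  rewrite RInt_scalR by (apply ex_RInt_lor; lra).
  pose proof (RInt_lor_sq k r Hk Hr). rewrite Rmult_assoc. apply Rmult_le_compat_l; auto.
  intros b. rewrite (RInt_extR _ (fun a => (K * lor k b) * lor k a) (-r) r) by (intros; ring).
  rewrite RInt_scalR by (apply ex_RInt_lor; lra). ring.
Qed.

Lemma C1_lor' k : 0 <= k -> C1 (lor k).
Proof. intros; apply C1_lor; auto. Qed.

Lemma C3_lor f g : C3 f -> C3 g -> (forall x y z, 0 <= f x y z) -> C3 (fun x y z => lor (f x y z) (g x y z)).
Proof.
  intros Hf Hg Hp. unfold lor. apply C3_inv.
  apply C3_plus. apply C3_const. apply C3_mult; auto. apply C3_pow; auto.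
  intros. specialize (Hp x y z). assert (0 <= g x y z ^ 2) by apply pow2_ge_0. nra.
Qed.

Ltac c3 := repeat first [ apply C3_const | apply C3_p0 | apply C3_p1 | apply C3_p2
  | apply C3_plus | apply C3_mult | apply C3_pow | apply C3_minus ].

Definition Mc a b c := 4 * (lor (1 + c^2) a * lor (1 + c^2) b).
Definition Mb a b c := 4 * (lor (1 + b^2) a * lor (1 + b^2) c).
Definition Ma a b c := 4 * (lor (1 + a^2) b * lor (1 + a^2) c).

Lemma sq_nonneg1 y : 0 <= 1 + y^2. Proof. pose proof (pow2_ge_0 y). lra. Qed.

Lemma C3_Mc : C3 Mc.
Proof. unfold Mc. c3; apply C3_lor; c3; intros; apply sq_nonneg1. Qed.
Lemma C3_Mb : C3 Mb.
Proof. unfold Mb. c3; apply C3_lor; c3; intros; apply sq_nonneg1. Qed.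
Lemma C3_Ma : C3 Ma.
Proof. unfold Ma. c3; apply C3_lor; c3; intros; apply sq_nonneg1. Qed.

Lemma C1_of_C3 g : C3 (fun x _ _ => g x) -> C1 g.
Proof. intros H. apply (C1_of_C2 (fun x _ => g x) 0). apply (C2_of_C3 (fun x y _ => g x) 0). exact H. Qed.

Lemma C1_lor1h h : C1 h -> C1 (fun c => 4 * PI^2 * (h c * lor 1 c)).
Proof.
  intros Hh. apply C1_of_C3. apply C3_mult. apply C3_const. apply C3_mult.
  apply (C3_comp h (fun x _ _ => x)); auto. apply C3_p0.
  apply C3_lor; [apply C3_const|apply C3_p0|intros; lra].
Qed.

Lemma I3_Mc h r : C1 h -> (forall c, 0 <= h c) -> 0 <= r ->
  I3 (fun a b c => Mc a b c * h c) r <= 4 * PI^2 * RInt (fun c => h c * lor 1 c) (-r) r.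
Proof.
  intros Hh Hp Hr.
  assert (HF : C3 (fun a b c => Mc a b c * h c)).
  { apply C3_mult. apply C3_Mc. apply (C3_comp h (fun _ _ z => z)); auto. apply C3_p2. }
  unfold I3. rewrite <- RInt_scalR by (apply C1_ex_RInt; apply C1_of_C3; apply C3_mult;
     [apply (C3_comp h (fun x _ _ => x)); auto; apply C3_p0|apply C3_lor; [apply C3_const|apply C3_p0|intros; lra]]).
  apply RInt_le. lra.
  apply C1_ex_RInt, P21', P32'; auto.
  apply C1_ex_RInt, C1_lor1h; auto.
  intros c _.
  rewrite (RInt_extR _ (fun b => RInt (fun a => (4 * h c) * (lor (1+c^2) a * lor (1+c^2) b)) (-r) r) (-r) r).
  eapply Rle_trans. apply RInt2_lor; auto. specialize (Hp c); lra. pose proof (pow2_ge_0 c); lra.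
  unfold lor. right. field. pose proof (pow2_ge_0 c). lra.
  intros b. apply RInt_extR. intros a. unfold Mc. ring.
Qed.

Lemma C1_hlor h : C1 h -> C1 (fun c => h c * lor 1 c).
Proof.
  intros Hh. apply C1_of_C3. apply C3_mult.
  apply (C3_comp h (fun x _ _ => x)); auto. apply C3_p0.
  apply C3_lor; [apply C3_const|apply C3_p0|intros; lra].
Qed.

Lemma I3_Mb h r : C1 h -> (forall c, 0 <= h c) -> 0 <= r ->
  I3 (fun a b c => Mb a b c * h b) r <= 4 * PI^2 * RInt (fun c => h c * lor 1 c) (-r) r.
Proof.
  intros Hh Hp Hr.
  assert (HF : C3 (fun a b c => Mb a b c * h b)).
  { apply C3_mult. apply C3_Mb. apply (C3_comp h (fun _ y _ => y)); auto. apply C3_p1. }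
  rewrite I3_swap_outer by auto.
  rewrite <- RInt_scalR by (apply C1_ex_RInt, C1_hlor; auto).
  apply RInt_le. lra.
  apply C1_ex_RInt, P21'. apply (P32' (fun a c b => Mb a b c * h b)). apply C3_swap12; auto.
  apply C1_ex_RInt, C1_lor1h; auto.
  intros b _.
  rewrite (RInt_extR _ (fun c => RInt (fun a => (4 * h b) * (lor (1+b^2) a * lor (1+b^2) c)) (-r) r) (-r) r).
  eapply Rle_trans. apply RInt2_lor; auto. specialize (Hp b); lra. pose proof (pow2_ge_0 b); lra.
  unfold lor. right. field. pose proof (pow2_ge_0 b). lra.
  intros c. apply RInt_extR. intros a. unfold Mb. ring.
Qed.

Lemma I3_Ma h r : C1 h -> (forall c, 0 <= h c) -> 0 <= r ->
  I3 (fun a b c => Ma a b c * h a) r <= 4 * PI^2 * RInt (fun c => h c * lor 1 c) (-r) r.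
Proof.
  intros Hh Hp Hr.
  assert (HF : C3 (fun a b c => Ma a b c * h a)).
  { apply C3_mult. apply C3_Ma. apply (C3_comp h (fun x _ _ => x)); auto. apply C3_p0. }
  rewrite I3_swap_inner by auto.
  rewrite (fubini2 (fun a c => RInt (fun b => Ma a b c * h a) (-r) r)).
  2: { apply (P32' (fun b a c => Ma a b c * h a)). apply C3_swap01; auto. }
  2: lra.
  rewrite <- RInt_scalR by (apply C1_ex_RInt, C1_hlor; auto).
  apply RInt_le. lra.
  apply C1_ex_RInt. apply (P21' (fun c a => RInt (fun b => Ma a b c * h a) (-r) r)).
  apply C2_swap. apply (P32' (fun b a c => Ma a b c * h a)). apply C3_swap01; auto.
  apply C1_ex_RInt, C1_lor1h; auto.
  intros a _.
  rewrite (RInt_extR _ (fun c => RInt (fun b => (4 * h a) * (lor (1+a^2) b * lor (1+a^2) c)) (-r) r) (-r) r).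
  eapply Rle_trans. apply RInt2_lor; auto. specialize (Hp a); lra. pose proof (pow2_ge_0 a); lra.
  unfold lor. right. field. pose proof (pow2_ge_0 a). lra.
  intros c. apply RInt_extR. intros b. unfold Ma. ring.
Qed.

Definition w (R y : R) := 2 * y^2 / (R^2 + y^2).
Definition R3 a b c := lor 1 (a*b) * lor 1 (a*c) * lor 1 (b*c).

Lemma w_nonneg R y : 0 < R -> 0 <= w R y.
Proof. intros. unfold w. apply Rmult_le_pos. pose proof (pow2_ge_0 y); lra.
  left; apply Rinv_0_lt_compat. pose proof (pow2_ge_0 y). pose proof (pow2_gt_0 R). nra. Qed.

Lemma w_mono R a c : 0 < R -> a^2 <= c^2 -> w R a <= w R c.
Proof.
  intros HR H. unfold w. assert (0 < R^2) by (apply pow2_gt_0; lra).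
  pose proof (pow2_ge_0 a).
  apply Rmult_le_reg_r with ((R^2 + a^2) * (R^2 + c^2)). nra.
  replace (2 * a ^ 2 / (R ^ 2 + a ^ 2) * ((R ^ 2 + a ^ 2) * (R ^ 2 + c ^ 2))) with (2*a^2*(R^2+c^2)) by (field; nra).
  replace (2 * c ^ 2 / (R ^ 2 + c ^ 2) * ((R ^ 2 + a ^ 2) * (R ^ 2 + c ^ 2))) with (2*c^2*(R^2+a^2)) by (field; nra).
  nra.
Qed.

Lemma w_ge1 R y : 0 < R -> R <= Rabs y -> 1 <= w R y.
Proof.
  intros HR H. unfold w. assert (R^2 <= y^2).
  { replace (y^2) with (Rabs y ^ 2) by (rewrite RPow_abs; apply Rabs_pos_eq; apply pow2_ge_0). apply pow_incr. lra. }
  assert (0 < R^2) by (apply pow2_gt_0; lra).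
  apply Rmult_le_reg_r with (R^2 + y^2). nra.
  replace (2 * y ^ 2 / (R ^ 2 + y ^ 2) * (R ^ 2 + y ^ 2)) with (2*y^2) by (field; nra). nra.
Qed.

Lemma lor_cmp a c : a^2 <= c^2 -> lor 1 (a*c) <= 2 * lor (1 + c^2) a.
Proof.
  intros H. unfold lor. pose proof (pow2_ge_0 a). pose proof (pow2_ge_0 c).
  assert (a^2 <= 1 + a^2*c^2).
  { destruct (Rle_dec (a^2) 1). nra. assert (1 < c^2) by lra. nra. }
  apply Rmult_le_reg_r with ((1 + 1 * (a*c)^2) * (1 + (1 + c^2) * a^2)).
  apply Rmult_lt_0_compat; nra.
  replace (/ (1 + 1 * (a * c) ^ 2) * ((1 + 1 * (a * c) ^ 2) * (1 + (1 + c ^ 2) * a ^ 2))) with (1 + (1 + c ^ 2) * a ^ 2) by (field; nra).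
  replace (2 * / (1 + (1 + c ^ 2) * a ^ 2) * ((1 + 1 * (a * c) ^ 2) * (1 + (1 + c ^ 2) * a ^ 2))) with (2 * (1 + 1 * (a * c) ^ 2)) by (field; nra).
  nra.
Qed.

Lemma R3_case_c a b c : a^2 <= c^2 -> b^2 <= c^2 -> R3 a b c <= Mc a b c.
Proof.
  intros Ha Hb. unfold R3, Mc.
  pose proof (lor_cmp a c Ha). pose proof (lor_cmp b c Hb).
  replace (lor 1 (b*c)) with (lor 1 (c*b)) by (f_equal; ring).
  assert (HL1 := lor_le1 1 (a*b) ltac:(lra)).
  pose proof (lor_pos 1 (a*b) ltac:(lra)). pose proof (lor_pos 1 (a*c) ltac:(lra)). pose proof (lor_pos 1 (c*b) ltac:(lra)).
  assert (lor 1 (c*b) <= 2 * lor (1 + c^2) b).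
  { replace (c*b) with (b*c) by ring. apply lor_cmp; auto. }
  assert (lor 1 (a*c) * lor 1 (c*b) <= (2 * lor (1 + c^2) a) * (2 * lor (1 + c^2) b)).
  { apply Rmult_le_compat; lra. }
  rewrite Rmult_assoc.
  assert (0 <= lor 1 (a * c) * lor 1 (c * b)) by nra.
  assert (lor 1 (a*b) * (lor 1 (a * c) * lor 1 (c * b)) <= 1 * (lor 1 (a * c) * lor 1 (c * b))) by (apply Rmult_le_compat_r; lra).
  lra.
Qed.

Lemma R3_pos a b c : 0 < R3 a b c.
Proof. unfold R3. repeat apply Rmult_lt_0_compat; apply lor_pos; lra. Qed.

Lemma R3_sym1 a b c : R3 a b c = R3 a c b.
Proof. unfold R3. replace (c*b) with (b*c) by ring. ring. Qed.

Lemma Mx_nonneg a b c : 0 <= Ma a b c /\ 0 <= Mb a b c /\ 0 <= Mc a b c.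
Proof.
  unfold Ma, Mb, Mc. pose proof (pow2_ge_0 a). pose proof (pow2_ge_0 b). pose proof (pow2_ge_0 c).
  repeat split; apply Rmult_le_pos; try lra; apply Rmult_le_pos; left; apply lor_pos; lra.
Qed.

Lemma R3_dom a b c : R3 a b c <= Ma a b c + Mb a b c + Mc a b c.
Proof.
  destruct (Mx_nonneg a b c) as [H1 [H2 H3]].
  destruct (Rle_dec (a^2) (c^2)); destruct (Rle_dec (b^2) (c^2)).
  - pose proof (R3_case_c a b c r r0). lra.
  -
    assert (R3 a b c <= Mb a b c).
    { rewrite R3_sym1. unfold Mb. pose proof (R3_case_c a c b ltac:(lra) ltac:(lra)). unfold Mc, R3 in *.
      replace (c*b) with (b*c) in * by ring. lra. }
    lra.
  - destruct (Rle_dec (a^2) (b^2)).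
    + assert (R3 a b c <= Mb a b c).
      { rewrite R3_sym1. pose proof (R3_case_c a c b ltac:(lra) ltac:(lra)). unfold Mc, Mb, R3 in *.
        replace (c*b) with (b*c) in * by ring. lra. }
      lra.
    + assert (R3 a b c <= Ma a b c).
      { assert (E : R3 a b c = R3 c b a) by (unfold R3; replace (c*b) with (b*c) by ring; replace (c*a) with (a*c) by ring; replace (b*a) with (a*b) by ring; ring).
        rewrite E. pose proof (R3_case_c c b a ltac:(lra) ltac:(lra)). unfold Mc, Ma in *. lra. }
      lra.
  - destruct (Rle_dec (a^2) (b^2)).
    + assert (R3 a b c <= Mb a b c).
      { rewrite R3_sym1. pose proof (R3_case_c a c b ltac:(lra) ltac:(lra)). unfold Mc, Mb, R3 in *.
        replace (c*b) with (b*c) in * by ring. lra. }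
      lra.
    + assert (R3 a b c <= Ma a b c).
      { assert (E : R3 a b c = R3 c b a) by (unfold R3; replace (c*b) with (b*c) by ring; replace (c*a) with (a*c) by ring; replace (b*a) with (a*b) by ring; ring).
        rewrite E. pose proof (R3_case_c c b a ltac:(lra) ltac:(lra)). unfold Mc, Ma in *. lra. }
      lra.
Qed.

Lemma R3_wdom R a b c : 0 < R ->
  R3 a b c * (w R a + w R b + w R c) <= 3 * (Ma a b c * w R a + Mb a b c * w R b + Mc a b c * w R c).
Proof.
  intros HR. destruct (Mx_nonneg a b c) as [H1 [H2 H3]].
  pose proof (w_nonneg R a HR). pose proof (w_nonneg R b HR). pose proof (w_nonneg R c HR).
  pose proof (R3_pos a b c).
  assert (Hc : forall M W, R3 a b c <= M -> w R a + w R b + w R c <= 3 * W -> 0 <= W ->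
     R3 a b c * (w R a + w R b + w R c) <= 3 * (M * W)).
  { intros M W HM HW HW0. replace (3 * (M*W)) with (M * (3*W)) by ring.
    apply Rmult_le_compat; lra. }
  assert (0 <= Ma a b c * w R a) by nra. assert (0 <= Mb a b c * w R b) by nra. assert (0 <= Mc a b c * w R c) by nra.
  assert (CB : b^2 >= a^2 -> b^2 >= c^2 -> R3 a b c * (w R a + w R b + w R c) <= 3 * (Mb a b c * w R b)).
  { intros r1 r2. assert (HM : R3 a b c <= Mb a b c).
    { rewrite R3_sym1. pose proof (R3_case_c a c b ltac:(lra) ltac:(lra)). unfold Mc, Mb, R3 in *.
      replace (c*b) with (b*c) in * by ring. lra. }
    pose proof (w_mono R a b HR ltac:(lra)). pose proof (w_mono R c b HR ltac:(lra)).
    apply Hc; auto; lra. }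
  assert (CA : a^2 >= b^2 -> a^2 >= c^2 -> R3 a b c * (w R a + w R b + w R c) <= 3 * (Ma a b c * w R a)).
  { intros r1 r2. assert (HM : R3 a b c <= Ma a b c).
    { assert (E : R3 a b c = R3 c b a) by (unfold R3; replace (c*b) with (b*c) by ring; replace (c*a) with (a*c) by ring; replace (b*a) with (a*b) by ring; ring).
      rewrite E. pose proof (R3_case_c c b a ltac:(lra) ltac:(lra)). unfold Mc, Ma in *. lra. }
    pose proof (w_mono R b a HR ltac:(lra)). pose proof (w_mono R c a HR ltac:(lra)).
    apply Hc; auto; lra. }
  assert (CC : c^2 >= a^2 -> c^2 >= b^2 -> R3 a b c * (w R a + w R b + w R c) <= 3 * (Mc a b c * w R c)).
  { intros r1 r2. assert (HM := R3_case_c a b c ltac:(lra) ltac:(lra)).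
    pose proof (w_mono R a c HR ltac:(lra)). pose proof (w_mono R b c HR ltac:(lra)).
    apply Hc; auto; lra. }
  destruct (Rle_dec (a^2) (c^2)); destruct (Rle_dec (b^2) (c^2)); destruct (Rle_dec (a^2) (b^2)).
  all: first [ pose proof (CC ltac:(lra) ltac:(lra)); lra
             | pose proof (CB ltac:(lra) ltac:(lra)); lra
             | pose proof (CA ltac:(lra) ltac:(lra)); lra ].
Qed.

Lemma C1_w R : 0 < R -> C1 (w R).
Proof.
  intros HR. apply C1_of_C3. unfold w. unfold Rdiv. apply C3_mult. c3.
  apply C3_inv. c3. intros. pose proof (pow2_gt_0 R ltac:(lra)). pose proof (pow2_ge_0 x). lra.
Qed.

Lemma C3_R3 : C3 R3.
Proof. unfold R3. c3; apply C3_lor; c3; intros; lra. Qed.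

Lemma RInt_1lor r : 0 <= r -> RInt (fun c => 1 * lor 1 c) (-r) r <= PI.
Proof.
  intros Hr. rewrite (RInt_extR _ (lor 1)) by (intros; ring).
  pose proof (RInt_lor' 1 r ltac:(lra) Hr). rewrite sqrt_1 in H. lra.
Qed.

Lemma RInt_wlor R r : 0 < R -> 0 <= r -> RInt (fun c => w R c * lor 1 c) (-r) r <= 2 * PI / R.
Proof.
  intros HR Hr.
  assert (HRR : 0 < R^2) by (apply pow2_gt_0; lra).
  apply Rle_trans with (RInt (fun c => 2 / R^2 * lor (/ R^2) c) (-r) r).
  - apply RInt_le. lra.
    apply C1_ex_RInt. apply C1_of_C3. apply C3_mult. apply (C3_comp (w R) (fun x _ _ => x)). apply C1_w; auto. apply C3_p0.
    apply C3_lor; [c3|apply C3_p0|intros; lra].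
    apply ex_RInt_scalR, ex_RInt_lor. left; apply Rinv_0_lt_compat; auto.
    intros c _. unfold w, lor. pose proof (pow2_ge_0 c).
    replace (2 / R^2 * / (1 + / R^2 * c^2)) with (2 / (R^2 + c^2)) by (field; lra).
    replace (2 * c ^ 2 / (R ^ 2 + c ^ 2) * / (1 + 1 * c ^ 2)) with ((2 / (R^2 + c^2)) * (c^2 / (1 + c^2))) by (field; lra).
    rewrite <- (Rmult_1_r (2 / (R^2 + c^2))) at 2. apply Rmult_le_compat_l.
    apply Rlt_le, Rdiv_lt_0_compat; lra.
    apply Rmult_le_reg_r with (1 + c^2). lra. field_simplify; lra.
  - rewrite RInt_scalR by (apply ex_RInt_lor; left; apply Rinv_0_lt_compat; auto).
    pose proof (RInt_lor' (/ R^2) r ltac:(apply Rinv_0_lt_compat; auto) Hr).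
    replace (sqrt (/ R^2)) with (/ R) in H.
    2:{ rewrite sqrt_inv. f_equal. rewrite sqrt_pow2; lra. }
    apply Rle_trans with (2 / R^2 * (PI / / R)).
    apply Rmult_le_compat_l. apply Rlt_le, Rdiv_lt_0_compat; lra. exact H.
    right. field. lra.
Qed.

Lemma C3_Mw_a R h : 0 < R -> C1 h -> C3 (fun a b c => Ma a b c * h a).
Proof. intros. apply C3_mult. apply C3_Ma. apply (C3_comp h (fun x _ _ => x)); auto. apply C3_p0. Qed.
Lemma C3_Mw_b R h : 0 < R -> C1 h -> C3 (fun a b c => Mb a b c * h b).
Proof. intros. apply C3_mult. apply C3_Mb. apply (C3_comp h (fun _ y _ => y)); auto. apply C3_p1. Qed.
Lemma C3_Mw_c R h : 0 < R -> C1 h -> C3 (fun a b c => Mc a b c * h c).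
Proof. intros. apply C3_mult. apply C3_Mc. apply (C3_comp h (fun _ _ z => z)); auto. apply C3_p2. Qed.

Lemma C1_one : C1 (fun _ => 1).
Proof. intros x; apply continuous_const. Qed.

Lemma I3_R3 r : 0 <= r -> I3 R3 r <= 12 * PI^3.
Proof.
  intros Hr.
  apply Rle_trans with (I3 (fun a b c => (Ma a b c * 1 + Mb a b c * 1) + Mc a b c * 1) r).
  - apply I3_le; auto. apply C3_R3.
    apply C3_plus; [apply C3_plus|]; [apply (C3_Mw_a 1)|apply (C3_Mw_b 1)|apply (C3_Mw_c 1)]; try lra; apply C1_one.
    intros. pose proof (R3_dom x y z). lra.
  - rewrite I3_plus, I3_plus.
    pose proof (I3_Ma (fun _ => 1) r C1_one ltac:(intros; lra) Hr).
    pose proof (I3_Mb (fun _ => 1) r C1_one ltac:(intros; lra) Hr).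
    pose proof (I3_Mc (fun _ => 1) r C1_one ltac:(intros; lra) Hr).
    pose proof (RInt_1lor r Hr). pose proof PI_RGT_0.
    assert (4 * PI^2 * RInt (fun c => 1 * lor 1 c) (-r) r <= 4 * PI^2 * PI) by (apply Rmult_le_compat_l; [nra|auto]).
    simpl in *. nra.
    all: first [apply (C3_Mw_a 1) | apply (C3_Mw_b 1) | apply (C3_Mw_c 1) | apply C3_plus]; try lra; try apply C1_one.
    all: first [apply (C3_Mw_a 1) | apply (C3_Mw_b 1) | apply (C3_Mw_c 1)]; try lra; try apply C1_one.
Qed.

Lemma I3_R3w R r : 0 < R -> 0 <= r ->
  I3 (fun a b c => R3 a b c * (w R a + w R b + w R c)) r <= 72 * PI^3 / R.
Proof.
  intros HR Hr. pose proof (C1_w R HR) as Cw.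
  apply Rle_trans with (I3 (fun a b c => 3 * ((Ma a b c * w R a + Mb a b c * w R b) + Mc a b c * w R c)) r).
  - apply I3_le; auto. apply C3_mult. apply C3_R3. apply C3_plus; [apply C3_plus|];
      apply (C3_comp (w R)); auto; c3.
    apply C3_mult. c3. apply C3_plus; [apply C3_plus|]; [apply (C3_Mw_a R)|apply (C3_Mw_b R)|apply (C3_Mw_c R)]; auto.
    intros. pose proof (R3_wdom R x y z HR). lra.
  - rewrite I3_scal, I3_plus, I3_plus.
    pose proof (I3_Ma (w R) r Cw (fun c => w_nonneg R c HR) Hr).
    pose proof (I3_Mb (w R) r Cw (fun c => w_nonneg R c HR) Hr).
    pose proof (I3_Mc (w R) r Cw (fun c => w_nonneg R c HR) Hr).
    pose proof (RInt_wlor R r HR Hr). pose proof PI_RGT_0.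
    assert (4 * PI^2 * RInt (fun c => w R c * lor 1 c) (-r) r <= 4 * PI^2 * (2 * PI / R)) by (apply Rmult_le_compat_l; [nra|auto]).
    replace (72 * PI^3 / R) with (3 * (3 * (4 * PI^2 * (2 * PI / R)))) by (field; lra). lra.
    all: repeat apply C3_plus; first [apply (C3_Mw_a R) | apply (C3_Mw_b R) | apply (C3_Mw_c R)]; auto.
Qed.

Lemma pow_le_one y n : 0 <= y <= 1 -> y ^ n <= 1.
Proof. intros H. induction n; simpl. lra. assert (0 <= y^n) by (apply pow_le; lra). nra. Qed.

Lemma pow_diff x y n : 0 <= x <= 1 -> 0 <= y <= 1 -> Rabs (x^n - y^n) <= INR n * Rabs (x - y).
Proof.
  intros Hx Hy. induction n.
  - simpl. rewrite Rminus_diag, Rabs_R0. lra.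
  - rewrite S_INR. simpl pow.
    replace (x * x^n - y * y^n) with (x * (x^n - y^n) + y^n * (x - y)) by ring.
    eapply Rle_trans. apply Rabs_triang. rewrite !Rabs_mult.
    assert (Rabs x <= 1) by (rewrite Rabs_pos_eq; lra).
    assert (Rabs (y^n) <= 1) by (rewrite Rabs_pos_eq by (apply pow_le; lra); apply pow_le_one; lra).
    pose proof (Rabs_pos (x^n - y^n)). pose proof (Rabs_pos (x - y)). nra.
Qed.

Lemma exp_neg_lor y : 0 <= y -> exp (- y) <= / (1 + y).
Proof.
  intros Hy. pose proof (exp_ge_1x y).
  assert (exp y * exp (-y) = 1) by (rewrite <- exp_plus, Rplus_opp_r, exp_0; auto).
  pose proof (exp_pos (-y)).
  apply Rmult_le_reg_l with (1 + y). lra. rewrite Rinv_r by lra. nra.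
Qed.

Lemma ch_exp_abs x : ch x <= exp (Rabs x).
Proof.
  unfold ch. destruct (Rle_dec 0 x).
  - rewrite Rabs_pos_eq by lra. assert (exp (-x) <= exp x) by (destruct (Req_dec x 0); [subst; rewrite Ropp_0; lra| left; apply exp_increasing; lra]). lra.
  - rewrite Rabs_left by lra. assert (exp x <= exp (-x)) by (left; apply exp_increasing; lra). lra.
Qed.

Lemma ch_pos x : 0 < ch x.
Proof. unfold ch. pose proof (exp_pos x). pose proof (exp_pos (-x)). lra. Qed.

Lemma exp_mono x y : x <= y -> exp x <= exp y.
Proof. intros H. destruct (Req_dec x y). subst; lra. left; apply exp_increasing; lra. Qed.

Lemma ch_gauss x k : 0 < k -> ch x * exp (- x^2 / (2*k)) <= exp k * exp (- x^2 / (4*k)).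
Proof.
  intros Hk. eapply Rle_trans. apply Rmult_le_compat_r. left; apply exp_pos. apply ch_exp_abs.
  rewrite <- !exp_plus. apply exp_mono.
  assert (HA : x^2 = Rabs x ^ 2) by (rewrite RPow_abs, Rabs_pos_eq; auto; apply pow2_ge_0).
  assert (E1 : - x^2 / (2*k) = - 2 * (Rabs x ^ 2 / (4*k))) by (rewrite HA; field; lra).
  assert (E2 : - x^2 / (4*k) = - (Rabs x ^ 2 / (4*k))) by (rewrite HA; field; lra).
  rewrite E1, E2.
  assert (k + Rabs x ^ 2 / (4*k) - Rabs x = (Rabs x - 2*k)^2/(4*k)) by (field; lra).
  assert (0 <= (Rabs x - 2*k)^2/(4*k)) by (apply Rmult_le_pos; [apply pow2_ge_0| left; apply Rinv_0_lt_compat; lra]).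
  lra.
Qed.

Lemma gauss_le x k : 0 < k -> exp (- x^2 / (2*k)) <= exp (- x^2 / (4*k)).
Proof.
  intros Hk. assert (0 <= x^2 / (4*k)) by (apply Rmult_le_pos; [apply pow2_ge_0| left; apply Rinv_0_lt_compat; lra]).
  assert (x^2/(2*k) = 2 * (x^2 / (4*k))) by (field; lra).
  destruct (Req_dec (x^2/(4*k)) 0).
  - assert (- x^2/(2*k) = - x^2/(4*k)) by (unfold Rdiv in *; lra). rewrite H2; lra.
  - left; apply exp_increasing. unfold Rdiv in *. lra.
Qed.

Lemma exp_lor x k : 0 < k -> exp (- x^2 / (4*k)) <= lor (/(4*k)) x.
Proof.
  intros Hk. unfold lor. replace (- x^2/(4*k)) with (- (/(4*k) * x^2)) by (field; lra).
  apply exp_neg_lor. apply Rmult_le_pos. left; apply Rinv_0_lt_compat; lra. apply pow2_ge_0.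
Qed.

Lemma F2_tail s0 s1 : F2 s0 s1 <= exp 2 * (lor (/8) s0 * lor (/8) s1).
Proof.
  unfold F2, A2, u2.
  replace (- ((s0^2 + s1^2)/4)) with (- s0^2/(2*2) + - s1^2/(2*2)) by field.
  rewrite exp_plus.
  pose proof (ch_gauss s0 2 ltac:(lra)). pose proof (ch_gauss s1 2 ltac:(lra)).
  pose proof (gauss_le s0 2 ltac:(lra)). pose proof (gauss_le s1 2 ltac:(lra)).
  pose proof (exp_lor s0 2 ltac:(lra)). pose proof (exp_lor s1 2 ltac:(lra)).
  replace (/ 8) with (/ (4*2)) by field.
  pose proof (exp_pos (- s0^2/(2*2))). pose proof (exp_pos (- s1^2/(2*2))).
  pose proof (exp_pos (- s0^2/(4*2))). pose proof (exp_pos (- s1^2/(4*2))).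
  pose proof (ch_pos s0). pose proof (ch_pos s1). pose proof (exp_pos 2).
  assert (T1 : ch s0 * exp (- s0^2/(2*2)) * exp (- s1^2/(2*2)) <= exp 2 * exp (- s0^2/(4*2)) * exp (- s1^2/(4*2))).
  { apply Rmult_le_compat; try nra. }
  assert (T2 : ch s1 * exp (- s1^2/(2*2)) * exp (- s0^2/(2*2)) <= exp 2 * exp (- s1^2/(4*2)) * exp (- s0^2/(4*2))).
  { apply Rmult_le_compat; try nra. }
  assert (T3 : exp 2 * exp (- s0^2/(4*2)) * exp (- s1^2/(4*2)) <= exp 2 * (lor (/(4*2)) s0 * lor (/(4*2)) s1)).
  { rewrite Rmult_assoc. apply Rmult_le_compat_l. lra. apply Rmult_le_compat; lra. }
  nra.
Qed.

Lemma F3_tail s0 s1 s2 : F3 s0 s1 s2 <= exp 3 * (lor (/12) s0 * lor (/12) s1 * lor (/12) s2).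
Proof.
  unfold F3, A3, u3.
  replace (- ((s0^2 + s1^2 + s2^2)/6)) with (- s0^2/(2*3) + - s1^2/(2*3) + - s2^2/(2*3)) by field.
  rewrite !exp_plus.
  assert (C0 := ch_gauss s0 3 ltac:(lra)). assert (C1 := ch_gauss s1 3 ltac:(lra)). assert (C2 := ch_gauss s2 3 ltac:(lra)).
  assert (G0 := gauss_le s0 3 ltac:(lra)). assert (G1 := gauss_le s1 3 ltac:(lra)). assert (G2 := gauss_le s2 3 ltac:(lra)).
  assert (L0 := exp_lor s0 3 ltac:(lra)). assert (L1 := exp_lor s1 3 ltac:(lra)). assert (L2 := exp_lor s2 3 ltac:(lra)).
  set (g0 := exp (- s0^2/(2*3))) in *. set (g1 := exp (- s1^2/(2*3))) in *. set (g2 := exp (- s2^2/(2*3))) in *.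
  set (h0 := exp (- s0^2/(4*3))) in *. set (h1 := exp (- s1^2/(4*3))) in *. set (h2 := exp (- s2^2/(4*3))) in *.
  replace (/ 12) with (/ (4*3)) by field.
  assert (0 < g0) by apply exp_pos. assert (0 < g1) by apply exp_pos. assert (0 < g2) by apply exp_pos.
  assert (0 < h0) by apply exp_pos. assert (0 < h1) by apply exp_pos. assert (0 < h2) by apply exp_pos.
  pose proof (ch_pos s0). pose proof (ch_pos s1). pose proof (ch_pos s2). pose proof (exp_pos 3).
  assert (P : h0 * h1 * h2 <= lor (/(4*3)) s0 * lor (/(4*3)) s1 * lor (/(4*3)) s2).
  { apply Rmult_le_compat; try nra; apply Rmult_le_compat; lra. }
  assert (T0 : ch s0 * g0 * g1 * g2 <= exp 3 * (h0 * h1 * h2)).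
  { replace (ch s0 * g0 * g1 * g2) with ((ch s0 * g0) * (g1 * g2)) by ring.
    replace (exp 3 * (h0 * h1 * h2)) with ((exp 3 * h0) * (h1 * h2)) by ring.
    apply Rmult_le_compat; try nra; apply Rmult_le_compat; lra. }
  assert (T1 : ch s1 * g0 * g1 * g2 <= exp 3 * (h0 * h1 * h2)).
  { replace (ch s1 * g0 * g1 * g2) with ((ch s1 * g1) * (g0 * g2)) by ring.
    replace (exp 3 * (h0 * h1 * h2)) with ((exp 3 * h1) * (h0 * h2)) by ring.
    apply Rmult_le_compat; try nra; apply Rmult_le_compat; lra. }
  assert (T2 : ch s2 * g0 * g1 * g2 <= exp 3 * (h0 * h1 * h2)).
  { replace (ch s2 * g0 * g1 * g2) with ((ch s2 * g2) * (g0 * g1)) by ring.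
    replace (exp 3 * (h0 * h1 * h2)) with ((exp 3 * h2) * (h0 * h1)) by ring.
    apply Rmult_le_compat; try nra; apply Rmult_le_compat; lra. }
  assert (exp 3 * (h0*h1*h2) <= exp 3 * (lor (/(4*3)) s0 * lor (/(4*3)) s1 * lor (/(4*3)) s2)) by (apply Rmult_le_compat_l; lra).
  replace ((ch s0 + ch s1 + ch s2) / 3 * (g0 * g1 * g2)) with ((ch s0 * g0 * g1 * g2 + ch s1 * g0 * g1 * g2 + ch s2 * g0 * g1 * g2) / 3) by field.
  lra.
Qed.

Lemma exp_q2_dom a b : exp (- q2 a b / 3) <= 73^2 * (lor 1 a * lor 1 b).
Proof.
  assert (Hq : - q2 a b / 3 <= - (a^4/288) + - (b^4/288)).
  { unfold q2. assert (0 <= a^2*b^2) by nra. nra. }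
  eapply Rle_trans. apply exp_mono. apply Hq. rewrite exp_plus.
  assert (K1 : forall y, exp (- (y^4/288)) <= 73 * lor 1 y).
  { intros y. eapply Rle_trans. apply exp_neg_lor. pose proof (pow2_ge_0 (y^2)). nra.
    unfold lor. pose proof (pow2_ge_0 y). pose proof (pow2_ge_0 (y^2 - 144)).
    apply Rmult_le_reg_r with ((1 + y^4/288) * (1 + 1 * y^2)).
    apply Rmult_lt_0_compat; nra.
    replace (/ (1 + y ^ 4 / 288) * ((1 + y ^ 4 / 288) * (1 + 1 * y ^ 2))) with (1 + y^2) by (field; nra).
    replace (73 * / (1 + 1 * y ^ 2) * ((1 + y ^ 4 / 288) * (1 + 1 * y ^ 2))) with (73 * (1 + y^4/288)) by (field; nra).
    nra. }
  pose proof (K1 a). pose proof (K1 b). pose proof (exp_pos (-(a^4/288))). pose proof (exp_pos (-(b^4/288))).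
  replace (73^2 * (lor 1 a * lor 1 b)) with ((73 * lor 1 a) * (73 * lor 1 b)) by ring.
  apply Rmult_le_compat; lra.
Qed.

Lemma exp_q3_dom a b c : exp (- q3 a b c / 3) <= 108^3 * R3 a b c.
Proof.
  assert (Hq : - q3 a b c / 3 = - ((a*b)^2/108) + - ((a*c)^2/108) + - ((b*c)^2/108)) by (unfold q3; field).
  rewrite Hq, !exp_plus.
  assert (K1 : forall y, exp (- (y^2/108)) <= 108 * lor 1 y).
  { intros y. eapply Rle_trans. apply exp_neg_lor. pose proof (pow2_ge_0 y). nra.
    unfold lor. pose proof (pow2_ge_0 y).
    apply Rmult_le_reg_r with ((1 + y^2/108) * (1 + 1 * y^2)).
    apply Rmult_lt_0_compat; nra.
    replace (/ (1 + y ^ 2 / 108) * ((1 + y ^ 2 / 108) * (1 + 1 * y ^ 2))) with (1 + y^2) by (field; nra).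
    replace (108 * / (1 + 1 * y ^ 2) * ((1 + y ^ 2 / 108) * (1 + 1 * y ^ 2))) with (108 * (1 + y^2/108)) by (field; nra).
    nra. }
  pose proof (K1 (a*b)). pose proof (K1 (a*c)). pose proof (K1 (b*c)).
  pose proof (exp_pos (-((a*b)^2/108))). pose proof (exp_pos (-((a*c)^2/108))). pose proof (exp_pos (-((b*c)^2/108))).
  unfold R3.
  replace (108^3 * (lor 1 (a*b) * lor 1 (a*c) * lor 1 (b*c))) with ((108 * lor 1 (a*b)) * (108 * lor 1 (a*c)) * (108 * lor 1 (b*c))) by ring.
  apply Rmult_le_compat; try (apply Rmult_le_pos; lra); try lra.
  apply Rmult_le_compat; lra.
Qed.

Lemma small_case Fv Gv u n : 0 <= Fv <= 1 -> 0 <= Gv <= 1 -> Rabs (Fv - Gv) <= u^3 ->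
  Rabs (Fv^n - Gv^n) <= INR n * u^3.
Proof.
  intros H1 H2 H3. eapply Rle_trans. apply pow_diff; auto. apply Rmult_le_compat_l. apply pos_INR. auto.
Qed.

Lemma abs_diff_le x y : 0 <= x -> 0 <= y -> Rabs (x - y) <= x + y.
Proof. intros. apply Rabs_le. lra. Qed.

Lemma sqrt_n_facts n : (1 <= n)%nat -> 0 < sqrt (INR n) /\ sqrt (INR n) * sqrt (INR n) = INR n.
Proof.
  intros. assert (0 < INR n) by (apply lt_0_INR; lia). split. apply sqrt_lt_R0; auto. apply sqrt_sqrt; lra.
Qed.

Lemma lor_half R y : 0 < R -> Rabs y <= R -> 1/2 <= lor (/ R^2) y.
Proof.
  intros HR Hy. unfold lor. assert (y^2 <= R^2).
  { replace (y^2) with (Rabs y ^ 2) by (rewrite RPow_abs; apply Rabs_pos_eq; apply pow2_ge_0).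
    apply pow_incr. split; [apply Rabs_pos|auto]. }
  assert (0 < R^2) by (apply pow_lt; lra).
  assert (/ R^2 * y^2 <= 1).
  { apply Rmult_le_reg_l with (R^2); auto. rewrite <- Rmult_assoc, Rinv_r by lra. lra. }
  assert (0 <= / R^2 * y^2) by (apply Rmult_le_pos; [left; apply Rinv_0_lt_compat; auto| apply pow2_ge_0]).
  apply Rmult_le_reg_r with (1 + / R^2 * y^2). lra.
  rewrite Rinv_l by lra. lra.
Qed.

Lemma lor_scale k y cc : 0 < cc -> lor k (y / cc) = lor (k / cc^2) y.
Proof. intros. unfold lor. f_equal. field. lra. Qed.

Lemma sumw3_ge1 R a b c : 0 < R -> (R < Rabs a \/ R < Rabs b \/ R < Rabs c) -> 1 <= w R a + w R b + w R c.
Proof.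
  intros HR H. pose proof (w_nonneg R a HR). pose proof (w_nonneg R b HR). pose proof (w_nonneg R c HR).
  destruct H as [H|[H|H]]; [pose proof (w_ge1 R a HR ltac:(lra))|pose proof (w_ge1 R b HR ltac:(lra))|pose proof (w_ge1 R c HR ltac:(lra))]; lra.
Qed.

Lemma big_coord R y : 0 <= R -> 2 * R^2 < y^2 -> R < Rabs y.
Proof.
  intros HR H. destruct (Rlt_dec R (Rabs y)); auto. exfalso.
  assert (y^2 <= R^2).
  { replace (y^2) with (Rabs y ^ 2) by (rewrite RPow_abs; apply Rabs_pos_eq; apply pow2_ge_0).
    apply pow_incr. split; [apply Rabs_pos|lra]. }
  pose proof (pow2_ge_0 R). lra.
Qed.

Lemma pow_tail Fv n : (1 <= n)%nat -> 0 <= Fv <= 39/40 -> Fv^n <= (39/40)^(n-1) * Fv.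
Proof.
  intros Hn H. destruct n. lia. replace (S n - 1)%nat with n by lia. simpl.
  rewrite Rmult_comm. apply Rmult_le_compat_r. lra. apply pow_incr. lra.
Qed.

Lemma master3 n R a b c : (1 <= n)%nat -> 2 <= R -> R^4 <= INR n ->
  Rabs (F3 (a / cn n) (b / cn n) (c / cn n) ^ n - exp (- q3 (a / cn n) (b / cn n) (c / cn n)) ^ n)
  <= R^6 / sqrt (INR n) * (lor (/R^2) a * lor (/R^2) b * lor (/R^2) c)
   + 2 * 108^3 * (R3 a b c * (w R a + w R b + w R c))
   + (39/40)^(n-1) * exp 3 * (lor (/(12 * sqrt (INR n))) a * lor (/(12 * sqrt (INR n))) b * lor (/(12 * sqrt (INR n))) c).
Proof.
  intros Hn HR HRn.
  pose proof (cn_pos n) as Hc. pose proof (cn_sq n Hn) as Hc2. destruct (sqrt_n_facts n Hn) as [Hsq Hsq2].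
  set (sq := sqrt (INR n)) in *. set (cc := cn n) in *.
  assert (HRsq : R^2 <= sq).
  { destruct (Rle_dec (R^2) sq); auto. exfalso. assert (sq < R^2) by lra.
    assert (sq * sq < R^2 * R^2) by (apply Rmult_le_0_lt_compat; lra). replace (R^4) with (R^2*R^2) in HRn by ring. lra. }
  set (sa := a / cc). set (sb := b / cc). set (sc := c / cc).
  set (Fv := F3 sa sb sc). set (Gv := exp (- q3 sa sb sc)).
  set (u := u3 sa sb sc). set (S := a^2 + b^2 + c^2).
  assert (Hu : u = S / (6 * sq)).
  { unfold u, u3, sa, sb, sc, S. rewrite <- Hc2. field. lra. }
  assert (HS : 0 <= S) by (unfold S; nra).
  assert (Hq : 0 <= q3 sa sb sc) by apply q3_nonneg.
  assert (HGn : Gv ^ n = exp (- q3 a b c)).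
  { unfold Gv. rewrite exp_pow. rewrite (q3_scale n a b c Hn). f_equal. fold cc sa sb sc. ring. }
  assert (Hq0 : 0 <= q3 a b c) by apply q3_nonneg.
  assert (HGdom : exp (- q3 a b c) <= 108^3 * R3 a b c).
  { eapply Rle_trans; [|apply exp_q3_dom]. apply exp_mono. lra. }
  assert (HFpos : 0 < Fv).
  { unfold Fv, F3, A3. pose proof (ch_pos sa). pose proof (ch_pos sb). pose proof (ch_pos sc).
    pose proof (exp_pos (- u3 sa sb sc)). apply Rmult_lt_0_compat; lra. }
  assert (Hu0 : 0 <= u) by apply u3_nonneg.
  assert (HF1 : Fv <= 1) by (unfold Fv, F3; apply (G_le1 _ _ (q3 sa sb sc)); auto; apply A3_upper).
  assert (HG : 0 < Gv <= 1) by (split; [apply exp_pos| apply exp_le1; lra]).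
  assert (HFn0 : 0 <= Fv^n) by (apply pow_le; lra). assert (HGn0 : 0 < Gv^n) by (apply pow_lt; lra).
  pose proof (R3_pos a b c) as HR3.
  assert (HRpos : 0 < R) by lra.
  assert (Hw : 0 <= w R a + w R b + w R c) by (pose proof (w_nonneg R a HRpos); pose proof (w_nonneg R b HRpos); pose proof (w_nonneg R c HRpos); lra).
  set (T1 := R^6 / sq * (lor (/R^2) a * lor (/R^2) b * lor (/R^2) c)).
  set (T2 := 2 * 108^3 * (R3 a b c * (w R a + w R b + w R c))).
  set (T3 := (39/40)^(n-1) * exp 3 * (lor (/(12 * sq)) a * lor (/(12 * sq)) b * lor (/(12 * sq)) c)).
  assert (HR2 : 0 < R^2) by (apply pow_lt; lra).
  assert (HT1 : 0 <= T1).
  { unfold T1. apply Rmult_le_pos. apply Rmult_le_pos. apply pow_le; lra. left; apply Rinv_0_lt_compat; lra.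
    repeat apply Rmult_le_pos; left; apply lor_pos; left; apply Rinv_0_lt_compat; lra. }
  assert (HT3 : 0 <= T3).
  { unfold T3. apply Rmult_le_pos. apply Rmult_le_pos. apply pow_le; lra. left; apply exp_pos.
    repeat apply Rmult_le_pos; left; apply lor_pos; left; apply Rinv_0_lt_compat; lra. }
  assert (HT2 : 0 <= T2) by (unfold T2; apply Rmult_le_pos; [lra|apply Rmult_le_pos; lra]).
  assert (HbigT2 : 1 <= w R a + w R b + w R c -> 2 * (108^3 * R3 a b c) <= T2).
  { intros H1. unfold T2. assert (R3 a b c <= R3 a b c * (w R a + w R b + w R c)) by nra. lra. }
  assert (Hdiff : Rabs (Fv^n - Gv^n) <= Fv^n + Gv^n) by (apply abs_diff_le; lra).
  destruct (Rle_dec u 1) as [Hu1|Hu1].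
  -
    assert (HFd : Fv <= exp (- q3 sa sb sc / 3)).
    { unfold Fv, F3. apply (G_dom (A3 sa sb sc) u); auto. apply A3_upper. }
    assert (HFn : Fv^n <= exp (- q3 a b c / 3)).
    { eapply Rle_trans. apply pow_incr. split; [lra|exact HFd].
      rewrite exp_pow, (q3_scale n a b c Hn). apply exp_mono. fold cc sa sb sc. right. field. }
    assert (HFn' : Fv^n <= 108^3 * R3 a b c) by (eapply Rle_trans; [exact HFn|apply exp_q3_dom]).
    assert (Hout : (R < Rabs a \/ R < Rabs b \/ R < Rabs c) -> Rabs (Fv^n - Gv^n) <= T1 + T2 + T3).
    { intros Ho. pose proof (sumw3_ge1 R a b c HRpos Ho). pose proof (HbigT2 H). lra. }
    destruct (Rle_dec (Rabs a) R); [|apply Hout; lra].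
    destruct (Rle_dec (Rabs b) R); [|apply Hout; lra].
    destruct (Rle_dec (Rabs c) R); [|apply Hout; lra].
    assert (HL : Rabs (Fv - Gv) <= u^3).
    { unfold Fv, F3. apply (G_local (A3 sa sb sc) u (q3 sa sb sc)); auto. apply q3_le. apply A3_lower. apply A3_upper. }
    assert (HD := small_case Fv Gv u n ltac:(lra) ltac:(lra) HL).
    assert (HSb : S <= 3 * R^2).
    { unfold S. assert (forall y, Rabs y <= R -> y^2 <= R^2).
      { intros y Hy. replace (y^2) with (Rabs y ^ 2) by (rewrite RPow_abs; apply Rabs_pos_eq; apply pow2_ge_0).
        apply pow_incr. split; [apply Rabs_pos|lra]. }
      pose proof (H a r). pose proof (H b r0). pose proof (H c r1). lra. }
    assert (Hnu : INR n * u^3 <= R^6 / sq * (1/8)).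
    { rewrite Hu. rewrite <- Hsq2.
      replace (sq * sq * (S / (6 * sq)) ^ 3) with (S^3 * / (216 * sq)) by (field; lra).
      replace (R^6 / sq * (1/8)) with ((3 * R^2)^3 * / (216 * sq)) by (field; lra).
      apply Rmult_le_compat_r. left; apply Rinv_0_lt_compat; lra.
      apply pow_incr; lra. }
    assert (Hbox : 1/8 <= lor (/R^2) a * lor (/R^2) b * lor (/R^2) c).
    { pose proof (lor_half R a HRpos r). pose proof (lor_half R b HRpos r0). pose proof (lor_half R c HRpos r1).
      replace (1/8) with ((1/2) * (1/2) * (1/2)) by field.
      apply Rmult_le_compat; try lra. apply Rmult_le_compat; lra. }
    assert (R^6 / sq * (1/8) <= T1).
    { unfold T1. apply Rmult_le_compat_l; auto. apply Rmult_le_pos. apply pow_le; lra. left; apply Rinv_0_lt_compat; lra. }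
    lra.
  -
    assert (Hbig : 6 * R^2 < S).
    { assert (u * (6 * sq) = S) by (rewrite Hu; field; lra). nra. }
    assert (Ho : R < Rabs a \/ R < Rabs b \/ R < Rabs c).
    { destruct (Rlt_dec (2 * R^2) (a^2)). left; apply big_coord; lra.
      destruct (Rlt_dec (2 * R^2) (b^2)). right; left; apply big_coord; lra.
      right; right; apply big_coord. lra. unfold S in Hbig. lra. }
    pose proof (sumw3_ge1 R a b c HRpos Ho). pose proof (HbigT2 H).
    assert (HF39 : Fv <= 39/40).
    { unfold Fv, F3. apply (G_tail (A3 sa sb sc) u (q3 sa sb sc)); auto. lra. apply A3_upper. }
    assert (HFt : Fv^n <= T3).
    { eapply Rle_trans. apply pow_tail; auto. lra.
      unfold T3. rewrite Rmult_assoc. apply Rmult_le_compat_l. apply pow_le; lra.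
      unfold Fv, sa, sb, sc. eapply Rle_trans. apply F3_tail.
      rewrite !(lor_scale _ _ cc) by auto. rewrite Hc2.
      replace (/ 12 / sq) with (/ (12 * sq)) by (field; lra). lra. }
    lra.
Qed.

Definition P2 a b := lor 1 a * lor 1 b.

Lemma sumw2_ge1 R a b : 0 < R -> (R < Rabs a \/ R < Rabs b) -> 1 <= w R a + w R b.
Proof.
  intros HR H. pose proof (w_nonneg R a HR). pose proof (w_nonneg R b HR).
  destruct H as [H|H]; [pose proof (w_ge1 R a HR ltac:(lra))|pose proof (w_ge1 R b HR ltac:(lra))]; lra.
Qed.

Lemma master2 n R a b : (1 <= n)%nat -> 2 <= R -> R^4 <= INR n ->
  Rabs (F2 (a / cn n) (b / cn n) ^ n - exp (- q2 (a / cn n) (b / cn n)) ^ n)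
  <= R^6 / sqrt (INR n) * (lor (/R^2) a * lor (/R^2) b)
   + 2 * 73^2 * (P2 a b * (w R a + w R b))
   + (39/40)^(n-1) * exp 2 * (lor (/(8 * sqrt (INR n))) a * lor (/(8 * sqrt (INR n))) b).
Proof.
  intros Hn HR HRn.
  pose proof (cn_pos n) as Hc. pose proof (cn_sq n Hn) as Hc2. destruct (sqrt_n_facts n Hn) as [Hsq Hsq2].
  set (sq := sqrt (INR n)) in *. set (cc := cn n) in *.
  assert (HRsq : R^2 <= sq).
  { destruct (Rle_dec (R^2) sq); auto. exfalso. assert (sq < R^2) by lra.
    assert (sq * sq < R^2 * R^2) by (apply Rmult_le_0_lt_compat; lra). replace (R^4) with (R^2*R^2) in HRn by ring. lra. }
  set (sa := a / cc). set (sb := b / cc).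
  set (Fv := F2 sa sb). set (Gv := exp (- q2 sa sb)).
  set (u := u2 sa sb). set (S := a^2 + b^2).
  assert (Hu : u = S / (4 * sq)).
  { unfold u, u2, sa, sb, S. rewrite <- Hc2. field. lra. }
  assert (HS : 0 <= S) by (unfold S; nra).
  assert (Hq : 0 <= q2 sa sb) by apply q2_nonneg.
  assert (HGn : Gv ^ n = exp (- q2 a b)).
  { unfold Gv. rewrite exp_pow. rewrite (q2_scale n a b Hn). f_equal. fold cc sa sb. ring. }
  assert (Hq0 : 0 <= q2 a b) by apply q2_nonneg.
  assert (HP2 : 0 < P2 a b) by (unfold P2; apply Rmult_lt_0_compat; apply lor_pos; lra).
  assert (HGdom : exp (- q2 a b) <= 73^2 * P2 a b).
  { eapply Rle_trans; [|apply exp_q2_dom]. apply exp_mono. lra. }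
  assert (HFpos : 0 < Fv).
  { unfold Fv, F2, A2. pose proof (ch_pos sa). pose proof (ch_pos sb).
    pose proof (exp_pos (- u2 sa sb)). apply Rmult_lt_0_compat; lra. }
  assert (Hu0 : 0 <= u) by apply u2_nonneg.
  assert (HF1 : Fv <= 1) by (unfold Fv, F2; apply (G_le1 _ _ (q2 sa sb)); auto; apply A2_upper).
  assert (HG : 0 < Gv <= 1) by (split; [apply exp_pos| apply exp_le1; lra]).
  assert (HFn0 : 0 <= Fv^n) by (apply pow_le; lra). assert (HGn0 : 0 < Gv^n) by (apply pow_lt; lra).
  assert (HRpos : 0 < R) by lra.
  assert (Hw : 0 <= w R a + w R b) by (pose proof (w_nonneg R a HRpos); pose proof (w_nonneg R b HRpos); lra).
  set (T1 := R^6 / sq * (lor (/R^2) a * lor (/R^2) b)).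
  set (T2 := 2 * 73^2 * (P2 a b * (w R a + w R b))).
  set (T3 := (39/40)^(n-1) * exp 2 * (lor (/(8 * sq)) a * lor (/(8 * sq)) b)).
  assert (HR2 : 0 < R^2) by (apply pow_lt; lra).
  assert (HT1 : 0 <= T1).
  { unfold T1. apply Rmult_le_pos. apply Rmult_le_pos. apply pow_le; lra. left; apply Rinv_0_lt_compat; lra.
    repeat apply Rmult_le_pos; left; apply lor_pos; left; apply Rinv_0_lt_compat; lra. }
  assert (HT3 : 0 <= T3).
  { unfold T3. apply Rmult_le_pos. apply Rmult_le_pos. apply pow_le; lra. left; apply exp_pos.
    repeat apply Rmult_le_pos; left; apply lor_pos; left; apply Rinv_0_lt_compat; lra. }
  assert (HT2 : 0 <= T2) by (unfold T2; apply Rmult_le_pos; [lra|apply Rmult_le_pos; lra]).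
  assert (HbigT2 : 1 <= w R a + w R b -> 2 * (73^2 * P2 a b) <= T2).
  { intros H1. unfold T2. assert (P2 a b <= P2 a b * (w R a + w R b)) by nra. lra. }
  assert (Hdiff : Rabs (Fv^n - Gv^n) <= Fv^n + Gv^n) by (apply abs_diff_le; lra).
  destruct (Rle_dec u 1) as [Hu1|Hu1].
  - assert (HFd : Fv <= exp (- q2 sa sb / 3)).
    { unfold Fv, F2. apply (G_dom (A2 sa sb) u); auto. apply A2_upper. }
    assert (HFn : Fv^n <= exp (- q2 a b / 3)).
    { eapply Rle_trans. apply pow_incr. split; [lra|exact HFd].
      rewrite exp_pow, (q2_scale n a b Hn). apply exp_mono. fold cc sa sb. right. field. }
    assert (HFn' : Fv^n <= 73^2 * P2 a b) by (eapply Rle_trans; [exact HFn|apply exp_q2_dom]).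
    assert (Hout : (R < Rabs a \/ R < Rabs b) -> Rabs (Fv^n - Gv^n) <= T1 + T2 + T3).
    { intros Ho. pose proof (sumw2_ge1 R a b HRpos Ho). pose proof (HbigT2 H). lra. }
    destruct (Rle_dec (Rabs a) R); [|apply Hout; lra].
    destruct (Rle_dec (Rabs b) R); [|apply Hout; lra].
    assert (HL : Rabs (Fv - Gv) <= u^3).
    { unfold Fv, F2. apply (G_local (A2 sa sb) u (q2 sa sb)); auto. apply q2_le. apply A2_lower. apply A2_upper. }
    assert (HD := small_case Fv Gv u n ltac:(lra) ltac:(lra) HL).
    assert (HSb : S <= 2 * R^2).
    { unfold S. assert (forall y, Rabs y <= R -> y^2 <= R^2).
      { intros y Hy. replace (y^2) with (Rabs y ^ 2) by (rewrite RPow_abs; apply Rabs_pos_eq; apply pow2_ge_0).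
        apply pow_incr. split; [apply Rabs_pos|lra]. }
      pose proof (H a r). pose proof (H b r0). lra. }
    assert (Hnu : INR n * u^3 <= R^6 / sq * (1/8)).
    { rewrite Hu. rewrite <- Hsq2.
      replace (sq * sq * (S / (4 * sq)) ^ 3) with (S^3 * / (64 * sq)) by (field; lra).
      replace (R^6 / sq * (1/8)) with ((2 * R^2)^3 * / (64 * sq)) by (field; lra).
      apply Rmult_le_compat_r. left; apply Rinv_0_lt_compat; lra.
      apply pow_incr; lra. }
    assert (Hbox : 1/8 <= lor (/R^2) a * lor (/R^2) b).
    { pose proof (lor_half R a HRpos r). pose proof (lor_half R b HRpos r0).
      assert ((1/2) * (1/2) <= lor (/R^2) a * lor (/R^2) b) by (apply Rmult_le_compat; lra). lra. }
    assert (R^6 / sq * (1/8) <= T1).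
    { unfold T1. apply Rmult_le_compat_l; auto. apply Rmult_le_pos. apply pow_le; lra. left; apply Rinv_0_lt_compat; lra. }
    lra.
  - assert (Hbig : 4 * R^2 < S).
    { assert (u * (4 * sq) = S) by (rewrite Hu; field; lra). nra. }
    assert (Ho : R < Rabs a \/ R < Rabs b).
    { destruct (Rlt_dec (2 * R^2) (a^2)). left; apply big_coord; lra.
      right; apply big_coord. lra. unfold S in Hbig. lra. }
    pose proof (sumw2_ge1 R a b HRpos Ho). pose proof (HbigT2 H).
    assert (HF39 : Fv <= 39/40).
    { unfold Fv, F2. apply (G_tail (A2 sa sb) u (q2 sa sb)); auto. lra. apply A2_upper. }
    assert (HFt : Fv^n <= T3).
    { eapply Rle_trans. apply pow_tail; auto. lra.
      unfold T3. rewrite Rmult_assoc. apply Rmult_le_compat_l. apply pow_le; lra.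
      unfold Fv, sa, sb. eapply Rle_trans. apply F2_tail.
      rewrite !(lor_scale _ _ cc) by auto. rewrite Hc2.
      replace (/ 8 / sq) with (/ (8 * sq)) by (field; lra). lra. }
    lra.
Qed.

Lemma I2_prod f g r : C1 f -> C1 g -> I2 (fun a b => f a * g b) r = RInt f (-r) r * RInt g (-r) r.
Proof.
  intros Hf Hg. unfold I2.
  rewrite (RInt_extR _ (fun b => RInt f (-r) r * g b)).
  apply RInt_scalR. apply C1_ex_RInt; auto.
  intros b. rewrite (RInt_extR _ (fun a => g b * f a)) by (intros; ring).
  rewrite RInt_scalR by (apply C1_ex_RInt; auto). ring.
Qed.

Lemma I3_prod f g h r : C1 f -> C1 g -> C1 h ->
  I3 (fun a b c => f a * g b * h c) r = RInt f (-r) r * RInt g (-r) r * RInt h (-r) r.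
Proof.
  intros Hf Hg Hh. unfold I3.
  rewrite (RInt_extR _ (fun c => (RInt f (-r) r * RInt g (-r) r) * h c)).
  apply RInt_scalR. apply C1_ex_RInt; auto.
  intros c. rewrite (RInt_extR _ (fun b => (RInt f (-r) r * h c) * g b)).
  rewrite RInt_scalR by (apply C1_ex_RInt; auto). ring.
  intros b. rewrite (RInt_extR _ (fun a => (g b * h c) * f a)) by (intros; ring).
  rewrite RInt_scalR by (apply C1_ex_RInt; auto). ring.
Qed.

Lemma C1_wlor R : 0 < R -> C1 (fun y => w R y * lor 1 y).
Proof.
  intros HR. apply C1_of_C3. apply C3_mult. apply (C3_comp (w R) (fun x _ _ => x)). apply C1_w; auto. apply C3_p0.
  apply C3_lor; [apply C3_const|apply C3_p0|intros; lra].
Qed.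

Lemma sqrt_invsq R : 0 < R -> sqrt (/ R^2) = / R.
Proof. intros. rewrite sqrt_inv. f_equal. rewrite sqrt_pow2; lra. Qed.

Lemma RInt_lorR R r : 0 < R -> 0 <= r -> RInt (lor (/ R^2)) (-r) r <= PI * R.
Proof.
  intros HR Hr. pose proof (RInt_lor' (/R^2) r ltac:(apply Rinv_0_lt_compat, pow_lt; lra) Hr).
  rewrite sqrt_invsq in H by auto. replace (PI / / R) with (PI * R) in H by (field; lra). exact H.
Qed.

Lemma RInt_lor_small k r : 0 < k <= 1 -> 0 <= r -> RInt (lor k) (-r) r <= PI / k.
Proof.
  intros Hk Hr. eapply Rle_trans. apply RInt_lor'; auto; lra.
  assert (k <= sqrt k).
  { rewrite <- (sqrt_pow2 k) at 1 by lra. apply sqrt_le_1_alt. nra. }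
  assert (0 < sqrt k) by (apply sqrt_lt_R0; lra).
  pose proof PI_RGT_0.
  apply Rmult_le_compat_l. lra. apply Rinv_le_contravar; lra.
Qed.

Lemma ex_lor k r : 0 <= k -> 0 <= RInt (lor k) (-r) (r) \/ True.
Proof. auto. Qed.

Lemma I2_T1 K R r : 0 <= K -> 0 < R -> 0 <= r ->
  I2 (fun a b => K * (lor (/R^2) a * lor (/R^2) b)) r <= K * (PI * R)^2.
Proof.
  intros HK HR Hr. assert (Hk : 0 <= / R^2) by (left; apply Rinv_0_lt_compat, pow_lt; lra).
  rewrite I2_scal. apply Rmult_le_compat_l; auto.
  rewrite I2_prod by (apply C1_lor'; auto).
  pose proof (RInt_lorR R r HR Hr). pose proof (RInt_lor_nonneg (/R^2) r Hk Hr).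
  replace ((PI*R)^2) with ((PI*R)*(PI*R)) by ring. apply Rmult_le_compat; auto.
  apply (C2_of_C3 (fun a b _ => lor (/R^2) a * lor (/R^2) b) 0). apply C3_mult; apply C3_lor; c3; intros; auto.
Qed.

Lemma I2_T3 K k r : 0 <= K -> 0 < k <= 1 -> 0 <= r ->
  I2 (fun a b => K * (lor k a * lor k b)) r <= K * (PI / k)^2.
Proof.
  intros HK Hk Hr.
  rewrite I2_scal. apply Rmult_le_compat_l; auto.
  rewrite I2_prod by (apply C1_lor'; lra).
  pose proof (RInt_lor_small k r Hk Hr). pose proof (RInt_lor_nonneg k r ltac:(lra) Hr).
  replace ((PI/k)^2) with ((PI/k)*(PI/k)) by ring. apply Rmult_le_compat; auto.
  apply (C2_of_C3 (fun a b _ => lor k a * lor k b) 0). apply C3_mult; apply C3_lor; c3; intros; lra.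
Qed.

Lemma I2_T2 K R r : 0 <= K -> 0 < R -> 0 <= r ->
  I2 (fun a b => K * ((lor 1 a * lor 1 b) * (w R a + w R b))) r <= K * (4 * PI^2 / R).
Proof.
  intros HK HR Hr.
  assert (CW := C1_wlor R HR). assert (CL := C1_lor' 1 ltac:(lra)).
  assert (E : forall a b, K * ((lor 1 a * lor 1 b) * (w R a + w R b)) =
     K * ((w R a * lor 1 a) * lor 1 b) + K * (lor 1 a * (w R b * lor 1 b))) by (intros; ring).
  unfold I2. rewrite (RInt_extR _ (fun b => RInt (fun a => K * ((w R a * lor 1 a) * lor 1 b) + K * (lor 1 a * (w R b * lor 1 b))) (-r) r)).
  2: { intros b. apply RInt_extR. intros a. apply E. }
  fold (I2 (fun a b => K * ((w R a * lor 1 a) * lor 1 b) + K * (lor 1 a * (w R b * lor 1 b))) r).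
  assert (C2a : C2 (fun a b => (w R a * lor 1 a) * lor 1 b)).
  { apply (C2_of_C3 (fun a b _ => (w R a * lor 1 a) * lor 1 b) 0). apply C3_mult.
    apply (C3_comp _ (fun x _ _ => x)); auto; apply C3_p0. apply (C3_comp _ (fun _ y _ => y)); auto; apply C3_p1. }
  assert (C2b : C2 (fun a b => lor 1 a * (w R b * lor 1 b))).
  { apply (C2_of_C3 (fun a b _ => lor 1 a * (w R b * lor 1 b)) 0). apply C3_mult.
    apply (C3_comp _ (fun x _ _ => x)); auto; apply C3_p0. apply (C3_comp _ (fun _ y _ => y)); auto; apply C3_p1. }
  rewrite I2_plus.
  2: { apply (C2_of_C3 (fun a b _ => K * ((w R a * lor 1 a) * lor 1 b)) 0). apply C3_mult. apply C3_const.
       apply C3_mult. apply (C3_comp _ (fun x _ _ => x)); auto; apply C3_p0. apply (C3_comp _ (fun _ y _ => y)); auto; apply C3_p1. }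
  2: { apply (C2_of_C3 (fun a b _ => K * (lor 1 a * (w R b * lor 1 b))) 0). apply C3_mult. apply C3_const.
       apply C3_mult. apply (C3_comp _ (fun x _ _ => x)); auto; apply C3_p0. apply (C3_comp _ (fun _ y _ => y)); auto; apply C3_p1. }
  rewrite !I2_scal by auto.
  rewrite (I2_prod (fun a => w R a * lor 1 a) (lor 1)) by auto.
  rewrite (I2_prod (lor 1) (fun b => w R b * lor 1 b)) by auto.
  pose proof (RInt_wlor R r HR Hr). pose proof (RInt_lor' 1 r ltac:(lra) Hr). rewrite sqrt_1 in H0.
  pose proof (RInt_lor_nonneg 1 r ltac:(lra) Hr).
  assert (0 <= RInt (fun c => w R c * lor 1 c) (-r) r).
  { apply RInt_nonneg; auto. apply C1_ex_RInt; auto. intros. apply Rmult_le_pos. apply w_nonneg; auto. left; apply lor_pos; lra. }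
  assert (RInt (fun c => w R c * lor 1 c) (-r) r * RInt (lor 1) (-r) r <= (2 * PI / R) * (PI / 1)) by (apply Rmult_le_compat; auto).
  assert (RInt (lor 1) (-r) r * RInt (fun c => w R c * lor 1 c) (-r) r <= (PI / 1) * (2 * PI / R)) by (apply Rmult_le_compat; auto).
  replace (K * (4 * PI^2 / R)) with (K * ((2 * PI / R) * (PI / 1)) + K * ((PI / 1) * (2 * PI / R))) by (field; lra).
  apply Rplus_le_compat; apply Rmult_le_compat_l; auto.
Qed.

Lemma I3_T1 K R r : 0 <= K -> 0 < R -> 0 <= r ->
  I3 (fun a b c => K * (lor (/R^2) a * lor (/R^2) b * lor (/R^2) c)) r <= K * (PI * R)^3.
Proof.
  intros HK HR Hr. assert (Hk : 0 <= / R^2) by (left; apply Rinv_0_lt_compat, pow_lt; lra).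
  rewrite I3_scal. apply Rmult_le_compat_l; auto.
  rewrite I3_prod by (apply C1_lor'; auto).
  pose proof (RInt_lorR R r HR Hr). pose proof (RInt_lor_nonneg (/R^2) r Hk Hr).
  replace ((PI*R)^3) with ((PI*R)*(PI*R)*(PI*R)) by ring.
  apply Rmult_le_compat; auto. apply Rmult_le_pos; auto. apply Rmult_le_compat; auto.
  c3; apply C3_lor; c3; intros; auto.
Qed.

Lemma I3_T3 K k r : 0 <= K -> 0 < k <= 1 -> 0 <= r ->
  I3 (fun a b c => K * (lor k a * lor k b * lor k c)) r <= K * (PI / k)^3.
Proof.
  intros HK Hk Hr.
  rewrite I3_scal. apply Rmult_le_compat_l; auto.
  rewrite I3_prod by (apply C1_lor'; lra).
  pose proof (RInt_lor_small k r Hk Hr). pose proof (RInt_lor_nonneg k r ltac:(lra) Hr).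
  replace ((PI/k)^3) with ((PI/k)*(PI/k)*(PI/k)) by ring.
  apply Rmult_le_compat; auto. apply Rmult_le_pos; auto. apply Rmult_le_compat; auto.
  c3; apply C3_lor; c3; intros; lra.
Qed.

Lemma I3_T2 K R r : 0 <= K -> 0 < R -> 0 <= r ->
  I3 (fun a b c => K * (R3 a b c * (w R a + w R b + w R c))) r <= K * (72 * PI^3 / R).
Proof.
  intros HK HR Hr. rewrite I3_scal. apply Rmult_le_compat_l; auto. apply I3_R3w; auto.
  pose proof (C1_w R HR). apply C3_mult. apply C3_R3. apply C3_plus; [apply C3_plus|];
      apply (C3_comp (w R)); auto; c3.
Qed.

Lemma I3_T3' K k r : 0 <= K -> 0 < k <= 1 -> 0 <= r ->
  I3 (fun a b c => K * (lor k a * lor k b * lor k c)) r <= K * (PI^3 / k^2).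
Proof.
  intros HK Hk Hr.
  rewrite I3_scal. apply Rmult_le_compat_l; auto.
  rewrite I3_prod by (apply C1_lor'; lra).
  pose proof (RInt_lor' k r ltac:(lra) Hr). pose proof (RInt_lor_nonneg k r ltac:(lra) Hr).
  assert (Hs : 0 < sqrt k) by (apply sqrt_lt_R0; lra).
  assert (Hsk : sqrt k * sqrt k = k) by (apply sqrt_sqrt; lra).
  assert (Hks : k <= sqrt k).
  { rewrite <- (sqrt_pow2 k) at 1 by lra. apply sqrt_le_1_alt. nra. }
  pose proof PI_RGT_0.
  apply Rle_trans with ((PI / sqrt k) * (PI / sqrt k) * (PI / sqrt k)).
  apply Rmult_le_compat; auto. apply Rmult_le_pos; auto. apply Rmult_le_compat; auto.
  replace ((PI / sqrt k) * (PI / sqrt k) * (PI / sqrt k)) with (PI^3 / (k * sqrt k)) by (rewrite <- Hsk at 1; field; lra).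
  apply Rmult_le_compat_l. apply pow_le; lra.
  apply Rinv_le_contravar. apply pow_lt; lra. simpl. rewrite Rmult_1_r. apply Rmult_le_compat_l; lra.
  c3; apply C3_lor; c3; intros; lra.
Qed.

Lemma arch_nat x : exists N : nat, x <= INR N.
Proof.
  destruct (archimed x) as [H1 H2].
  destruct (Rle_dec x 0). exists 0%nat. simpl. lra.
  exists (Z.to_nat (up x)). rewrite INR_IZR_INZ. rewrite Z2Nat.id. lra.
  apply le_IZR. lra.
Qed.

Lemma sqrt_ge n M : 0 <= M -> M^2 <= INR n -> M <= sqrt (INR n).
Proof.
  intros HM H. rewrite <- (sqrt_pow2 M HM). apply sqrt_le_1_alt. lra.
Qed.

Lemma bernoulli2 h m : 0 <= h -> 1 + INR m * h + INR m * (INR m - 1) / 2 * h^2 <= (1 + h)^m.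
Proof.
  intros Hh. induction m.
  - simpl. lra.
  - rewrite S_INR. simpl pow.
    assert (0 <= INR m) by apply pos_INR.
    assert (0 <= INR m * INR m * h^3 / 2) by (apply Rmult_le_pos; [repeat apply Rmult_le_pos; try lra; apply pow_le; lra| lra]).
    assert ((1 + h) * (1 + INR m * h + INR m * (INR m - 1) / 2 * h ^ 2) <= (1+h) * (1+h)^m) by (apply Rmult_le_compat_l; lra).
    assert ((1 + h) * (1 + INR m * h + INR m * (INR m - 1) / 2 * h ^ 2)
            = 1 + (INR m + 1) * h + (INR m + 1) * (INR m + 1 - 1) / 2 * h ^ 2 + (INR m * (INR m - 1) / 2 * h^3)) by (simpl; field).
    destruct m. simpl in *. nra.
    assert (1 <= INR (S m)) by (rewrite S_INR; pose proof (pos_INR m); lra).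
    assert (0 <= INR (S m) * (INR (S m) - 1) / 2 * h^3).
    { apply Rmult_le_pos. apply Rmult_le_pos. nra. lra. apply pow_le; lra. }
    lra.
Qed.

Lemma geom_tail n : (2 <= n)%nat -> INR n * (39/40)^(n-1) <= 6084 / (INR n - 1).
Proof.
  intros Hn. set (m := (n-1)%nat).
  assert (Hm : INR m = INR n - 1) by (unfold m; rewrite minus_INR by lia; simpl; ring).
  assert (Hm1 : 1 <= INR m) by (unfold m; apply (le_INR 1); lia).
  rewrite <- Hm. assert (Hn' : INR n = INR m + 1) by lra. rewrite Hn'.
  set (h := 1/39).
  pose proof (bernoulli2 h m ltac:(unfold h; lra)).
  assert (Hb : INR m ^ 2 * h ^ 2 / 2 <= (1 + h) ^ m).
  { eapply Rle_trans; [|exact H]. unfold h. nra. }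
  assert (Heq : (39/40)^m * (1+h)^m = 1) by (rewrite <- Rpow_mult_distr; unfold h; replace (39/40 * (1+1/39)) with 1 by field; apply pow1).
  assert (Hpos : 0 < (39/40)^m) by (apply pow_lt; lra).
  assert (HP : (39/40)^m <= 2 / (INR m ^2 * h^2)).
  { apply Rmult_le_reg_r with (INR m ^ 2 * h^2 / 2). unfold h; nra.
    replace (2 / (INR m ^ 2 * h ^ 2) * (INR m ^ 2 * h ^ 2 / 2)) with 1 by (field; unfold h; nra). nra. }
  apply Rle_trans with ((INR m + 1) * (2 / (INR m ^ 2 * h ^ 2))). apply Rmult_le_compat_l; lra.
  unfold h. apply Rmult_le_reg_r with (INR m). lra.
  replace (6084 / INR m * INR m) with 6084 by (field; lra).
  replace ((INR m + 1) * (2 / (INR m ^ 2 * (1 / 39) ^ 2)) * INR m) with (3042 * (1 + 1 / INR m)) by (field; lra).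
  assert (1 / INR m <= 1) by (apply Rmult_le_reg_r with (INR m); [lra|]; replace (1 / INR m * INR m) with 1 by (field; lra); lra).
  lra.
Qed.

Ltac cc3 := repeat first [ apply C3_const | apply C3_p0 | apply C3_p1 | apply C3_p2
  | apply C3_minus | apply C3_plus | apply C3_opp | apply C3_mult | apply C3_pow
  | apply (C3_comp exp); [apply C1_exp|] | apply (C3_comp Rabs); [apply C1_abs|]
  | apply C3_lor ].

Lemma C3_ext f g : (forall x y z, f x y z = g x y z) -> C3 g -> C3 f.
Proof.
  intros H Hg x y z. eapply continuous_ext; [|apply Hg]. intros [a [b c]]. simpl. symmetry; apply H.
Qed.

Lemma C2_ext f g : (forall x y, f x y = g x y) -> C2 g -> C2 f.
Proof.
  intros H Hg x y. eapply continuous_ext; [|apply Hg]. intros [a b]. simpl. symmetry; apply H.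
Qed.

Opaque C3.

Lemma vec2_0 a b : vec2 a b 0%nat = a. Proof. reflexivity. Qed.
Lemma vec2_1 a b : vec2 a b 1%nat = b. Proof. reflexivity. Qed.
Lemma vec3_0 a b c : vec3 a b c 0%nat = a. Proof. reflexivity. Qed.
Lemma vec3_1 a b c : vec3 a b c 1%nat = b. Proof. reflexivity. Qed.
Lemma vec3_2 a b c : vec3 a b c 2%nat = c. Proof. reflexivity. Qed.

Lemma psi2_vec a b : psi 2 (vec2 a b) = exp (- q2 a b).
Proof. rewrite psi_2. reflexivity. Qed.
Lemma psi3_vec a b c : psi 3 (vec3 a b c) = exp (- q3 a b c).
Proof. rewrite psi_3. reflexivity. Qed.
Lemma psin2_vec n a b : (1 <= n)%nat -> psi_n 2 n (vec2 a b) = F2 (a / cn n) (b / cn n) ^ n.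
Proof. intros Hn. rewrite psi_n_2 by auto. reflexivity. Qed.
Lemma psin3_vec n a b c : (1 <= n)%nat -> psi_n 3 n (vec3 a b c) = F3 (a / cn n) (b / cn n) (c / cn n) ^ n.
Proof. intros Hn. rewrite psi_n_3 by auto. reflexivity. Qed.

Lemma C3_q2 : C3 (fun a b _ => exp (- q2 a b)).
Proof. unfold q2, Rdiv. Timeout 20 cc3. Qed.
Lemma C3_F2n n : C3 (fun a b _ => F2 (a / cn n) (b / cn n) ^ n).
Proof. unfold F2, A2, u2, ch, Rdiv. Timeout 20 cc3. Qed.
Lemma C3_F3n n : C3 (fun a b c => F3 (a / cn n) (b / cn n) (c / cn n) ^ n).
Proof. unfold F3, A3, u3, ch, Rdiv. Timeout 20 cc3. Qed.
Lemma C3_q3 : C3 (fun a b c => exp (- q3 a b c)).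
Proof. unfold q3, Rdiv. Timeout 20 cc3. Qed.

Opaque C3.

Lemma exp_q2_pow n a b : (1 <= n)%nat -> exp (- q2 a b) = exp (- q2 (a / cn n) (b / cn n)) ^ n.
Proof. intros Hn. rewrite exp_pow, (q2_scale n a b Hn). f_equal. ring. Qed.

Lemma Cdiff2 n : (1 <= n)%nat -> C2 (fun a b => Rabs (psi_n 2 n (vec2 a b) - psi 2 (vec2 a b))).
Proof.
  intros Hn. apply (C2_ext _ (fun a b => Rabs (F2 (a / cn n) (b / cn n) ^ n - exp (- q2 a b)))).
  intros. rewrite psin2_vec, psi2_vec by auto. reflexivity.
  apply (C2_of_C3 (fun a b _ => Rabs (F2 (a / cn n) (b / cn n) ^ n - exp (- q2 a b))) 0).
  apply (C3_comp Rabs); [apply C1_abs|]. apply C3_minus. apply C3_F2n. apply C3_q2.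
Qed.

Lemma Cpsi2 : C2 (fun a b => Rabs (psi 2 (vec2 a b))).
Proof.
  apply (C2_ext _ (fun a b => Rabs (exp (- q2 a b)))). intros. rewrite psi2_vec. reflexivity.
  apply (C2_of_C3 (fun a b _ => Rabs (exp (- q2 a b))) 0).
  apply (C3_comp Rabs); [apply C1_abs|]. apply C3_q2.
Qed.

Definition B2 n R a b := R^6 / sqrt (INR n) * (lor (/R^2) a * lor (/R^2) b)
   + 2 * 73^2 * (P2 a b * (w R a + w R b))
   + (39/40)^(n-1) * exp 2 * (lor (/(8 * sqrt (INR n))) a * lor (/(8 * sqrt (INR n))) b).

Lemma inv_nonneg x : 0 < x -> 0 <= / x.
Proof. intros; left; apply Rinv_0_lt_compat; auto. Qed.

Lemma C2_T1 K k : 0 <= k -> C2 (fun a b => K * (lor k a * lor k b)).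
Proof.
  intros Hk. apply (C2_of_C3 (fun a b _ => K * (lor k a * lor k b)) 0). cc3; intros; auto.
Qed.

Lemma C2_T2 K R : 0 < R -> C2 (fun a b => K * (P2 a b * (w R a + w R b))).
Proof.
  intros HR. pose proof (C1_w R HR).
  apply (C2_of_C3 (fun a b _ => K * (P2 a b * (w R a + w R b))) 0). unfold P2.
  apply C3_mult. apply C3_const. apply C3_mult. cc3; intros; lra.
  apply C3_plus. apply (C3_comp (w R) (fun x _ _ => x)); auto; apply C3_p0.
  apply (C3_comp (w R) (fun _ y _ => y)); auto; apply C3_p1.
Qed.

Lemma C2_plus f g : C2 f -> C2 g -> C2 (fun a b => f a b + g a b).
Proof. intros. apply (C2_of_C3 (fun a b _ => f a b + g a b) 0). apply C3_plus; apply C3_of_C2; auto. Qed.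

Lemma main2_L1 eps : 0 < eps -> exists N : nat, forall n : nat, (N <= n)%nat ->
  L1_le 2 (fun t => psi_n 2 n t - psi 2 t) eps.
Proof.
  intros Heps.
  set (Kw := 2 * 73^2 * (4 * PI^2)).
  assert (HPI := PI_RGT_0).
  assert (HKw : 0 < Kw) by (unfold Kw; apply Rmult_lt_0_compat; [lra| nra]).
  set (R := 2 + 3 * Kw / eps).
  assert (HR : 2 <= R) by (unfold R; assert (0 < 3 * Kw / eps) by (apply Rdiv_lt_0_compat; lra); lra).
  assert (HKwR : Kw / R <= eps / 3).
  { apply Rmult_le_reg_r with R. lra.
    replace (Kw / R * R) with Kw by (field; lra).
    replace (eps / 3 * R) with (2 * eps / 3 + Kw) by (unfold R; field; lra). lra. }
  set (A := R^6 * (PI * R)^2).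
  assert (HA : 0 <= A) by (unfold A; apply Rmult_le_pos; apply pow_le; nra).
  set (C3c := 64 * PI^2 * exp 2 * 6084).
  assert (HC3 : 0 < C3c).
  { unfold C3c. pose proof (exp_pos 2). assert (0 < PI^2) by (apply pow_lt; lra).
    assert (0 < 64 * PI^2 * exp 2) by (apply Rmult_lt_0_compat; lra). lra. }
  destruct (arch_nat (R^4 + (3 * A / eps)^2 + 3 * C3c / eps + 3)) as [N HN].
  exists N. intros n HnN.
  assert (HNn : INR N <= INR n) by (apply le_INR; auto).
  assert (HA3 : 0 <= 3 * A / eps) by (apply Rmult_le_pos; [lra| apply inv_nonneg; lra]).
  assert (HC3e : 0 <= 3 * C3c / eps) by (apply Rmult_le_pos; [lra| apply inv_nonneg; lra]).
  assert (HR4 : 0 <= R^4) by (apply pow_le; lra).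
  assert (Hsqp : 0 <= (3 * A / eps)^2) by apply pow2_ge_0.
  assert (Hn2 : (2 <= n)%nat) by (apply INR_le; simpl; lra).
  assert (Hn1 : (1 <= n)%nat) by lia.
  destruct (sqrt_n_facts n Hn1) as [Hsq Hsq2]. set (sq := sqrt (INR n)) in *.
  assert (Hsq1 : 1 <= sq) by (apply (sqrt_ge n 1); [lra|simpl; lra]).
  assert (HsqA : 3 * A / eps <= sq) by (apply sqrt_ge; auto; lra).
  split.
  - intros r Hr. exists (Ival 2 (fun t => Rabs (psi_n 2 n t - psi 2 t)) r).
    apply box_exists2. apply Cdiff2; auto.
  - intros r l Hr Hl. apply box_unique in Hl. rewrite Hl, Ival2.
    apply Rle_trans with (I2 (B2 n R) r).
    + apply I2_le; auto. apply Cdiff2; auto.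
      unfold B2. fold sq. apply C2_plus. apply C2_plus. apply C2_T1. apply inv_nonneg, pow_lt; lra.
      apply C2_T2; lra. apply C2_T1. apply inv_nonneg; lra.
      intros a b _ _. rewrite psin2_vec, psi2_vec, (exp_q2_pow n a b) by auto.
      apply master2; auto. lra.
    + unfold B2. fold sq.
      assert (Hk8 : 0 < / (8 * sq) <= 1).
      { split. apply Rinv_0_lt_compat; lra. rewrite <- Rinv_1. apply Rinv_le_contravar; lra. }
      assert (HRp : 0 < R) by lra.
      rewrite I2_plus, I2_plus.
      2: apply C2_T1; apply inv_nonneg, pow_lt; lra.
      2: apply C2_T2; lra.
      2: apply C2_plus; [apply C2_T1; apply inv_nonneg, pow_lt; lra| apply C2_T2; lra].
      2: apply C2_T1; lra.
      pose proof (I2_T1 (R^6 / sq) R r ltac:(apply Rmult_le_pos; [apply pow_le; lra| apply inv_nonneg; lra]) HRp Hr) as B1.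
      pose proof (I2_T2 (2 * 73^2) R r ltac:(lra) HRp Hr) as B2'. unfold P2.
      pose proof (I2_T3 ((39/40)^(n-1) * exp 2) (/ (8 * sq)) r ltac:(apply Rmult_le_pos; [apply pow_le; lra| left; apply exp_pos]) Hk8 Hr) as B3.
      assert (E1 : R^6 / sq * (PI * R)^2 <= eps / 3).
      { replace (R^6 / sq * (PI * R)^2) with (A / sq) by (unfold A; field; lra).
        apply Rmult_le_reg_r with sq; [lra|]. replace (A / sq * sq) with A by (field; lra).
        apply Rmult_le_reg_l with (3 / eps). apply Rdiv_lt_0_compat; lra.
        replace (3 / eps * (eps / 3 * sq)) with sq by (field; lra). unfold Rdiv in *. nra. }
      assert (E2 : 2 * 73^2 * (4 * PI^2 / R) <= eps / 3).
      { replace (2 * 73^2 * (4 * PI^2 / R)) with (Kw / R) by (unfold Kw; field; lra). lra. }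
      assert (E3 : (39/40)^(n-1) * exp 2 * (PI / / (8 * sq))^2 <= eps / 3).
      { replace ((PI / / (8 * sq))^2) with (64 * PI^2 * (sq * sq)) by (field; lra). rewrite Hsq2.
        pose proof (geom_tail n Hn2).
        assert (Hn1' : 1 <= INR n - 1) by lra.
        replace ((39 / 40) ^ (n - 1) * exp 2 * (64 * PI ^ 2 * INR n)) with (64 * PI^2 * exp 2 * (INR n * (39/40)^(n-1))) by ring.
        assert (0 < 64 * PI^2 * exp 2) by (pose proof (exp_pos 2); assert (0 < PI^2) by (apply pow_lt; lra); apply Rmult_lt_0_compat; lra).
        apply Rle_trans with (64 * PI^2 * exp 2 * (6084 / (INR n - 1))). apply Rmult_le_compat_l; lra.
        replace (64 * PI ^ 2 * exp 2 * (6084 / (INR n - 1))) with (C3c / (INR n - 1)) by (unfold C3c; field; lra).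
        apply Rmult_le_reg_r with (INR n - 1); [lra|]. replace (C3c / (INR n - 1) * (INR n - 1)) with C3c by (field; lra).
        assert (3 * C3c / eps <= INR n - 1) by lra.
        apply Rmult_le_reg_l with (3 / eps). apply Rdiv_lt_0_compat; lra.
        replace (3 / eps * (eps / 3 * (INR n - 1))) with (INR n - 1) by (field; lra). unfold Rdiv in *. lra. }
      lra.
Qed.

Lemma main2_L1psi : exists c, L1_le 2 (psi 2) c.
Proof.
  exists (73^2 * (PI / 1)^2). split.
  - intros r Hr. exists (Ival 2 (fun t => Rabs (psi 2 t)) r). apply box_exists2. apply Cpsi2.
  - intros r l Hr Hl. apply box_unique in Hl. rewrite Hl, Ival2.
    eapply Rle_trans; [|apply (I2_T3 (73^2) 1 r); lra].
    apply I2_le; auto. apply Cpsi2. apply C2_T1; lra.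
    intros a b _ _. rewrite psi2_vec. rewrite Rabs_pos_eq by (left; apply exp_pos).
    eapply Rle_trans; [|apply exp_q2_dom]. apply exp_mono. pose proof (q2_nonneg a b). lra.
Qed.

Lemma main2_unif r eps : 0 < r -> 0 < eps -> exists N : nat, forall n : nat, (N <= n)%nat ->
  forall t : nat -> R, (forall i, (i < 2)%nat -> Rabs (t i) <= r) -> Rabs (psi_n 2 n t - psi 2 t) < eps.
Proof.
  intros Hr Heps.
  set (M := r^2 + r^6 / (8 * eps) + 1).
  assert (HM : 0 <= r^6/(8*eps)) by (apply Rmult_le_pos; [apply pow_le; lra| apply inv_nonneg; lra]).
  assert (Hr2 : 0 <= r^2) by apply pow2_ge_0.
  destruct (arch_nat (M^2 + 1)) as [N HN]. exists N. intros n HnN t Ht.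
  assert (HNn : INR N <= INR n) by (apply le_INR; auto).
  assert (HM1 : 1 <= M) by (unfold M; lra).
  assert (Hn1 : (1 <= n)%nat) by (apply INR_le; simpl; nra).
  destruct (sqrt_n_facts n Hn1) as [Hsq Hsq2].
  pose proof (cn_pos n) as Hc. pose proof (cn_sq n Hn1) as Hc2.
  set (sq := sqrt (INR n)) in *.
  assert (HsqM : M <= sq) by (apply sqrt_ge; lra).
  rewrite psi_n_2, (psi_2' n) by auto.
  set (cc := cn n) in *. set (sa := t 0%nat / cc). set (sb := t 1%nat / cc).
  set (Fv := F2 sa sb). set (Gv := exp (- q2 sa sb)).
  set (u := u2 sa sb). set (S := t 0%nat ^ 2 + t 1%nat ^ 2).
  assert (Hu : u = S / (4 * sq)).
  { unfold u, u2, sa, sb, S. rewrite <- Hc2. field. lra. }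
  assert (Hq : 0 <= q2 sa sb) by apply q2_nonneg.
  assert (HFpos : 0 < Fv).
  { unfold Fv, F2, A2. pose proof (ch_pos sa). pose proof (ch_pos sb).
    pose proof (exp_pos (- u2 sa sb)). apply Rmult_lt_0_compat; lra. }
  assert (Hu0 : 0 <= u) by apply u2_nonneg.
  assert (HF1 : Fv <= 1) by (unfold Fv, F2; apply (G_le1 _ _ (q2 sa sb)); auto; apply A2_upper).
  assert (HG : 0 < Gv <= 1) by (split; [apply exp_pos| apply exp_le1; lra]).
  assert (HSb : S <= 2 * r^2).
  { unfold S. assert (forall y, Rabs y <= r -> y^2 <= r^2).
    { intros y Hy. replace (y^2) with (Rabs y ^ 2) by (rewrite RPow_abs; apply Rabs_pos_eq; apply pow2_ge_0).
      apply pow_incr. split; [apply Rabs_pos|lra]. }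
    pose proof (H _ (Ht 0%nat ltac:(lia))). pose proof (H _ (Ht 1%nat ltac:(lia))). lra. }
  assert (HS : 0 <= S) by (unfold S; nra).
  assert (Hu1 : u <= 1).
  { assert (r^2 <= sq) by (unfold M in HsqM; lra). rewrite Hu. apply Rmult_le_reg_r with (4 * sq). lra. replace (S / (4 * sq) * (4 * sq)) with S by (field; lra). lra. }
  assert (HL : Rabs (Fv - Gv) <= u^3).
  { unfold Fv, F2. apply (G_local (A2 sa sb) u (q2 sa sb)); auto. apply q2_le. apply A2_lower. apply A2_upper. }
  assert (HD := small_case Fv Gv u n ltac:(lra) ltac:(lra) HL).
  assert (Hnu : INR n * u^3 <= r^6 / (8 * sq)).
  { rewrite Hu. rewrite <- Hsq2.
    replace (sq * sq * (S / (4 * sq)) ^ 3) with (S^3 * / (64 * sq)) by (field; lra).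
    replace (r^6 / (8 * sq)) with ((2 * r^2)^3 * / (64 * sq)) by (field; lra).
    apply Rmult_le_compat_r. left; apply Rinv_0_lt_compat; lra.
    apply pow_incr; lra. }
  assert (r^6 / (8 * sq) < eps).
  { apply Rmult_lt_reg_r with (8 * sq). lra. replace (r^6 / (8*sq) * (8*sq)) with (r^6) by (field; lra).
    assert (r^6/(8*eps) < sq) by (unfold M in HsqM; lra).
    assert (r^6 = r^6/(8*eps) * (8 * eps)) by (field; lra). nra. }
  lra.
Qed.

Theorem main2 :
  (forall r eps, 0 < r -> 0 < eps ->
     exists N : nat, forall n : nat, (N <= n)%nat ->
       forall t : nat -> R, (forall i, (i < 2)%nat -> Rabs (t i) <= r) ->
         Rabs (psi_n 2 n t - psi 2 t) < eps) /\
  (forall eps, 0 < eps ->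
     exists N : nat, forall n : nat, (N <= n)%nat ->
       L1_le 2 (fun t => psi_n 2 n t - psi 2 t) eps) /\
  (exists c, L1_le 2 (psi 2) c).
Proof. split; [|split]. apply main2_unif. apply main2_L1. apply main2_L1psi. Qed.

Opaque C3.

Lemma exp_q3_pow n a b c : (1 <= n)%nat -> exp (- q3 a b c) = exp (- q3 (a / cn n) (b / cn n) (c / cn n)) ^ n.
Proof. intros Hn. rewrite exp_pow, (q3_scale n a b c Hn). f_equal. ring. Qed.

Lemma Cdiff3 n : (1 <= n)%nat -> C3 (fun a b c => Rabs (psi_n 3 n (vec3 a b c) - psi 3 (vec3 a b c))).
Proof.
  intros Hn. apply (C3_ext _ (fun a b c => Rabs (F3 (a / cn n) (b / cn n) (c / cn n) ^ n - exp (- q3 a b c)))).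
  intros. rewrite psin3_vec, psi3_vec by auto. reflexivity.
  apply (C3_comp Rabs); [apply C1_abs|]. apply C3_minus. apply C3_F3n. apply C3_q3.
Qed.

Lemma Cpsi3 : C3 (fun a b c => Rabs (psi 3 (vec3 a b c))).
Proof.
  apply (C3_ext _ (fun a b c => Rabs (exp (- q3 a b c)))). intros. rewrite psi3_vec. reflexivity.
  apply (C3_comp Rabs); [apply C1_abs|]. apply C3_q3.
Qed.

Definition B3 n R a b c := R^6 / sqrt (INR n) * (lor (/R^2) a * lor (/R^2) b * lor (/R^2) c)
   + 2 * 108^3 * (R3 a b c * (w R a + w R b + w R c))
   + (39/40)^(n-1) * exp 3 * (lor (/(12 * sqrt (INR n))) a * lor (/(12 * sqrt (INR n))) b * lor (/(12 * sqrt (INR n))) c).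

Lemma C3_T1 K k : 0 <= k -> C3 (fun a b c => K * (lor k a * lor k b * lor k c)).
Proof. intros Hk. cc3; intros; auto. Qed.

Lemma C3_T2 K R : 0 < R -> C3 (fun a b c => K * (R3 a b c * (w R a + w R b + w R c))).
Proof.
  intros HR. pose proof (C1_w R HR).
  apply C3_mult. apply C3_const. apply C3_mult. apply C3_R3.
  apply C3_plus; [apply C3_plus|].
  apply (C3_comp (w R) (fun x _ _ => x)); auto; apply C3_p0.
  apply (C3_comp (w R) (fun _ y _ => y)); auto; apply C3_p1.
  apply (C3_comp (w R) (fun _ _ z => z)); auto; apply C3_p2.
Qed.

Lemma sqrt_le_n n : (1 <= n)%nat -> sqrt (INR n) <= INR n.
Proof.
  intros Hn. destruct (sqrt_n_facts n Hn) as [H1 H2].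
  assert (1 <= INR n) by (apply (le_INR 1); auto).
  assert (1 <= sqrt (INR n)) by (apply (sqrt_ge n 1); [lra|simpl; lra]). nra.
Qed.

Lemma main3_L1 eps : 0 < eps -> exists N : nat, forall n : nat, (N <= n)%nat ->
  L1_le 3 (fun t => psi_n 3 n t - psi 3 t) eps.
Proof.
  intros Heps.
  set (Kw := 2 * 108^3 * (72 * PI^3)).
  assert (HPI := PI_RGT_0).
  assert (HPI3 : 0 < PI^3) by (apply pow_lt; lra).
  assert (HKw : 0 < Kw) by (unfold Kw; apply Rmult_lt_0_compat; lra).
  set (R := 2 + 3 * Kw / eps).
  assert (HR : 2 <= R) by (unfold R; assert (0 < 3 * Kw / eps) by (apply Rdiv_lt_0_compat; lra); lra).
  assert (HKwR : Kw / R <= eps / 3).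
  { apply Rmult_le_reg_r with R. lra.
    replace (Kw / R * R) with Kw by (field; lra).
    replace (eps / 3 * R) with (2 * eps / 3 + Kw) by (unfold R; field; lra). lra. }
  set (A := R^6 * (PI * R)^3).
  assert (HA : 0 <= A) by (unfold A; apply Rmult_le_pos; apply pow_le; nra).
  set (C3c := 144 * PI^3 * exp 3 * 6084).
  assert (HC3 : 0 < C3c).
  { unfold C3c. pose proof (exp_pos 3).
    assert (0 < 144 * PI^3 * exp 3) by (apply Rmult_lt_0_compat; lra). lra. }
  destruct (arch_nat (R^4 + (3 * A / eps)^2 + 3 * C3c / eps + 3)) as [N HN].
  exists N. intros n HnN.
  assert (HNn : INR N <= INR n) by (apply le_INR; auto).
  assert (HA3 : 0 <= 3 * A / eps) by (apply Rmult_le_pos; [lra| apply inv_nonneg; lra]).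
  assert (HC3e : 0 <= 3 * C3c / eps) by (apply Rmult_le_pos; [lra| apply inv_nonneg; lra]).
  assert (HR4 : 0 <= R^4) by (apply pow_le; lra).
  assert (Hsqp : 0 <= (3 * A / eps)^2) by apply pow2_ge_0.
  assert (Hn2 : (2 <= n)%nat) by (apply INR_le; simpl; lra).
  assert (Hn1 : (1 <= n)%nat) by lia.
  pose proof (sqrt_le_n n Hn1) as Hsqn.
  destruct (sqrt_n_facts n Hn1) as [Hsq Hsq2]. set (sq := sqrt (INR n)) in *.
  assert (Hsq1 : 1 <= sq) by (apply (sqrt_ge n 1); [lra|simpl; lra]).
  assert (HsqA : 3 * A / eps <= sq) by (apply sqrt_ge; auto; lra).
  split.
  - intros r Hr. exists (Ival 3 (fun t => Rabs (psi_n 3 n t - psi 3 t)) r).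
    apply box_exists3. apply Cdiff3; auto.
  - intros r l Hr Hl. apply box_unique in Hl. rewrite Hl, Ival3.
    apply Rle_trans with (I3 (B3 n R) r).
    + apply I3_le; auto. apply Cdiff3; auto.
      unfold B3. fold sq. apply C3_plus. apply C3_plus. apply C3_T1. apply inv_nonneg, pow_lt; lra.
      apply C3_T2; lra. apply C3_T1. apply inv_nonneg; lra.
      intros a b c _ _ _. rewrite psin3_vec, psi3_vec, (exp_q3_pow n a b c) by auto.
      apply master3; auto. lra.
    + unfold B3. fold sq.
      assert (Hk8 : 0 < / (12 * sq) <= 1).
      { split. apply Rinv_0_lt_compat; lra. rewrite <- Rinv_1. apply Rinv_le_contravar; lra. }
      assert (HRp : 0 < R) by lra.
      rewrite I3_plus, I3_plus.
      2: apply C3_T1; apply inv_nonneg, pow_lt; lra.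
      2: apply C3_T2; lra.
      2: apply C3_plus; [apply C3_T1; apply inv_nonneg, pow_lt; lra| apply C3_T2; lra].
      2: apply C3_T1; lra.
      pose proof (I3_T1 (R^6 / sq) R r ltac:(apply Rmult_le_pos; [apply pow_le; lra| apply inv_nonneg; lra]) HRp Hr) as B1.
      pose proof (I3_T2 (2 * 108^3) R r ltac:(lra) HRp Hr) as B2'.
      pose proof (I3_T3' ((39/40)^(n-1) * exp 3) (/ (12 * sq)) r ltac:(apply Rmult_le_pos; [apply pow_le; lra| left; apply exp_pos]) Hk8 Hr) as B3'.
      assert (E1 : R^6 / sq * (PI * R)^3 <= eps / 3).
      { replace (R^6 / sq * (PI * R)^3) with (A / sq) by (unfold A; field; lra).
        apply Rmult_le_reg_r with sq; [lra|]. replace (A / sq * sq) with A by (field; lra).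
        apply Rmult_le_reg_l with (3 / eps). apply Rdiv_lt_0_compat; lra.
        replace (3 / eps * (eps / 3 * sq)) with sq by (field; lra). unfold Rdiv in *. nra. }
      assert (E2 : 2 * 108^3 * (72 * PI^3 / R) <= eps / 3).
      { replace (2 * 108^3 * (72 * PI^3 / R)) with (Kw / R) by (unfold Kw; field; lra). lra. }
      assert (E3 : (39/40)^(n-1) * exp 3 * (PI^3 / (/ (12 * sq))^2) <= eps / 3).
      { replace (PI^3 / (/ (12 * sq))^2) with (144 * PI^3 * (sq * sq)) by (field; lra). rewrite Hsq2.
        pose proof (geom_tail n Hn2).
        assert (Hn1' : 1 <= INR n - 1) by lra.
        replace ((39 / 40) ^ (n - 1) * exp 3 * (144 * PI ^ 3 * INR n)) with (144 * PI^3 * exp 3 * (INR n * (39/40)^(n-1))) by ring.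
        assert (0 < 144 * PI^3 * exp 3) by (pose proof (exp_pos 3); apply Rmult_lt_0_compat; lra).
        apply Rle_trans with (144 * PI^3 * exp 3 * (6084 / (INR n - 1))). apply Rmult_le_compat_l; lra.
        replace (144 * PI ^ 3 * exp 3 * (6084 / (INR n - 1))) with (C3c / (INR n - 1)) by (unfold C3c; field; lra).
        apply Rmult_le_reg_r with (INR n - 1); [lra|]. replace (C3c / (INR n - 1) * (INR n - 1)) with C3c by (field; lra).
        assert (3 * C3c / eps <= INR n - 1) by lra.
        apply Rmult_le_reg_l with (3 / eps). apply Rdiv_lt_0_compat; lra.
        replace (3 / eps * (eps / 3 * (INR n - 1))) with (INR n - 1) by (field; lra). unfold Rdiv in *. lra. }
      lra.
Qed.

Lemma main3_L1psi : exists c, L1_le 3 (psi 3) c.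
Proof.
  exists (108^3 * (12 * PI^3)). split.
  - intros r Hr. exists (Ival 3 (fun t => Rabs (psi 3 t)) r). apply box_exists3. apply Cpsi3.
  - intros r l Hr Hl. apply box_unique in Hl. rewrite Hl, Ival3.
    apply Rle_trans with (I3 (fun a b c => 108^3 * R3 a b c) r).
    apply I3_le; auto. apply Cpsi3. apply C3_mult. apply C3_const. apply C3_R3.
    intros a b c _ _ _. rewrite psi3_vec. rewrite Rabs_pos_eq by (left; apply exp_pos).
    eapply Rle_trans; [|apply exp_q3_dom]. apply exp_mono. pose proof (q3_nonneg a b c). lra.
    rewrite I3_scal by apply C3_R3. apply Rmult_le_compat_l. lra. apply I3_R3; auto.
Qed.

Lemma main3_unif r eps : 0 < r -> 0 < eps -> exists N : nat, forall n : nat, (N <= n)%nat ->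
  forall t : nat -> R, (forall i, (i < 3)%nat -> Rabs (t i) <= r) -> Rabs (psi_n 3 n t - psi 3 t) < eps.
Proof.
  intros Hr Heps.
  set (M := r^2 + r^6 / (8 * eps) + 1).
  assert (HM : 0 <= r^6/(8*eps)) by (apply Rmult_le_pos; [apply pow_le; lra| apply inv_nonneg; lra]).
  assert (Hr2 : 0 <= r^2) by apply pow2_ge_0.
  destruct (arch_nat (M^2 + 1)) as [N HN]. exists N. intros n HnN t Ht.
  assert (HNn : INR N <= INR n) by (apply le_INR; auto).
  assert (HM1 : 1 <= M) by (unfold M; lra).
  assert (Hn1 : (1 <= n)%nat) by (apply INR_le; simpl; nra).
  destruct (sqrt_n_facts n Hn1) as [Hsq Hsq2].
  pose proof (cn_pos n) as Hc. pose proof (cn_sq n Hn1) as Hc2.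
  set (sq := sqrt (INR n)) in *.
  assert (HsqM : M <= sq) by (apply sqrt_ge; lra).
  rewrite psi_n_3, (psi_3' n) by auto.
  set (cc := cn n) in *. set (sa := t 0%nat / cc). set (sb := t 1%nat / cc). set (sc := t 2%nat / cc).
  set (Fv := F3 sa sb sc). set (Gv := exp (- q3 sa sb sc)).
  set (u := u3 sa sb sc). set (S := t 0%nat ^ 2 + t 1%nat ^ 2 + t 2%nat ^ 2).
  assert (Hu : u = S / (6 * sq)).
  { unfold u, u3, sa, sb, sc, S. rewrite <- Hc2. field. lra. }
  assert (Hq : 0 <= q3 sa sb sc) by apply q3_nonneg.
  assert (HFpos : 0 < Fv).
  { unfold Fv, F3, A3. pose proof (ch_pos sa). pose proof (ch_pos sb). pose proof (ch_pos sc).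
    pose proof (exp_pos (- u3 sa sb sc)). apply Rmult_lt_0_compat; lra. }
  assert (Hu0 : 0 <= u) by apply u3_nonneg.
  assert (HF1 : Fv <= 1) by (unfold Fv, F3; apply (G_le1 _ _ (q3 sa sb sc)); auto; apply A3_upper).
  assert (HG : 0 < Gv <= 1) by (split; [apply exp_pos| apply exp_le1; lra]).
  assert (HSb : S <= 3 * r^2).
  { unfold S. assert (forall y, Rabs y <= r -> y^2 <= r^2).
    { intros y Hy. replace (y^2) with (Rabs y ^ 2) by (rewrite RPow_abs; apply Rabs_pos_eq; apply pow2_ge_0).
      apply pow_incr. split; [apply Rabs_pos|lra]. }
    pose proof (H _ (Ht 0%nat ltac:(lia))). pose proof (H _ (Ht 1%nat ltac:(lia))). pose proof (H _ (Ht 2%nat ltac:(lia))). lra. }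
  assert (HS : 0 <= S) by (unfold S; nra).
  assert (Hu1 : u <= 1).
  { assert (r^2 <= sq) by (unfold M in HsqM; lra). rewrite Hu. apply Rmult_le_reg_r with (6 * sq). lra.
    replace (S / (6 * sq) * (6 * sq)) with S by (field; lra). lra. }
  assert (HL : Rabs (Fv - Gv) <= u^3).
  { unfold Fv, F3. apply (G_local (A3 sa sb sc) u (q3 sa sb sc)); auto. apply q3_le. apply A3_lower. apply A3_upper. }
  assert (HD := small_case Fv Gv u n ltac:(lra) ltac:(lra) HL).
  assert (Hnu : INR n * u^3 <= r^6 / (8 * sq)).
  { rewrite Hu. rewrite <- Hsq2.
    replace (sq * sq * (S / (6 * sq)) ^ 3) with (S^3 * / (216 * sq)) by (field; lra).
    replace (r^6 / (8 * sq)) with ((3 * r^2)^3 * / (216 * sq)) by (field; lra).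
    apply Rmult_le_compat_r. left; apply Rinv_0_lt_compat; lra.
    apply pow_incr; lra. }
  assert (r^6 / (8 * sq) < eps).
  { apply Rmult_lt_reg_r with (8 * sq). lra. replace (r^6 / (8*sq) * (8*sq)) with (r^6) by (field; lra).
    assert (r^6/(8*eps) < sq) by (unfold M in HsqM; lra).
    assert (r^6 = r^6/(8*eps) * (8 * eps)) by (field; lra). nra. }
  lra.
Qed.

Theorem main3 :
  (forall r eps, 0 < r -> 0 < eps ->
     exists N : nat, forall n : nat, (N <= n)%nat ->
       forall t : nat -> R, (forall i, (i < 3)%nat -> Rabs (t i) <= r) ->
         Rabs (psi_n 3 n t - psi 3 t) < eps) /\
  (forall eps, 0 < eps ->
     exists N : nat, forall n : nat, (N <= n)%nat ->
       L1_le 3 (fun t => psi_n 3 n t - psi 3 t) eps) /\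
  (exists c, L1_le 3 (psi 3) c).
Proof. split; [|split]. apply main3_unif. apply main3_L1. apply main3_L1psi. Qed.


Theorem mainTheorem7 (d : nat) (hd : d = 2%nat \/ d = 3%nat) :
  (* locally uniform convergence *)
  (forall r eps, 0 < r -> 0 < eps ->
     exists N : nat, forall n : nat, (N <= n)%nat ->
       forall t : nat -> R, (forall i, (i < d)%nat -> Rabs (t i) <= r) ->
         Rabs (psi_n d n t - psi d t) < eps) /\
  (* convergence in L^1(R^d) *)
  (forall eps, 0 < eps ->
     exists N : nat, forall n : nat, (N <= n)%nat ->
       L1_le d (fun t => psi_n d n t - psi d t) eps) /\
  (* psi is in L^1(R^d) *)
  (exists c, L1_le d (psi d) c).
Proof.
  destruct hd as [H|H]; subst d. apply main2. apply main3.
Qed.
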